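(* Let $k=\mathbb F_2$, $R\in\operatorname{Ob}(\hat{\mathcal C})$, $G=\mathrm{SL}_3(R)$, $\bar\rho:G\to\mathrm{GL}_3(\mathbb F_2)$ induced by reduction and $\iota:G\hookrightarrow\mathrm{GL}_3(R)$ the inclusion. (i) There exists a lift $\rho_0$ of $\bar\rho$ to $\mathbb Z_2$. (ii) There is no $R\in\operatorname{Ob}(\hat{\mathcal C})$ for which $\iota$ is a universal lift of $\bar\rho$.
   Context: Let $k$ be a finite field. $\hat{\mathcal C}$ is the category of complete noetherian local commutative rings with residue field $k$, with local homomorphisms inducing the identity on $k$; $\mathfrak m_S$ is the maximal ideal of $S$. For a profinite group $G$ and continuous $\bar\rho:G\to\mathrm{GL}_n(k)$, a lift to $S\in\hat{\mathcal C}$ is a continuous $\rho:G\to\mathrm{GL}_n(S)$ whose reduction is $\bar\rho$; lifts are strictly equivalent if conjugate by an element of $I+M_n(\mathfrak m_S)$; $\mathrm{Def}_{\bar\rho}(S)$ is the set of strict equivalence classes. A lift $\rho$ to $R$ is universal if $f\mapsto[\mathrm{GL}_n(f)\circ\rho]$ ($\mathrm{GL}_n(f)$ applying $f$ entrywise) is a natural isomorphism $\mathrm{Hom}_{\hat{\mathcal C}}(R,-)\to\mathrm{Def}_{\bar\rho}$. $\mathrm{SL}_n(R)$ carries its profinite topology. *)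

(* Defs.v *)
From Stdlib Require Import Classical ClassicalEpsilon FunctionalExtensionality ProofIrrelevance.
From HB Require Import structures.
From mathcomp Require Import all_boot all_order all_algebra.
Set Implicit Arguments. Unset Strict Implicit. Unset Printing Implicit Defensive.
Import GRing.Theory Num.Theory.
Local Open Scope ring_scope.

(* The ring Z_2 of 2-adic integers, as the inverse limit of Z/2^n Z:   *)
(* coherent sequences x_n in [0, 2^n) with x_n = x_{n+1} mod 2^n.      *)

Definition pw (n : nat) : int := (2 ^ n)%N%:Z.

Record Z2 := MkZ2 {
  z2seq : nat -> int ;
  z2coh : forall n, z2seq n = modz (z2seq n.+1) (pw n) }.

Lemma modz_mulr (a d e : int) : modz (modz a (d * e)) d = modz a d.
Proof. by rewrite {2}(divz_eq a (d * e)) [d * e]mulrC mulrA modzMDl. Qed.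

Lemma pwS n : pw n.+1 = pw n * 2.
Proof. by rewrite /pw expnSr PoszM. Qed.

Lemma modpwS (a : int) n : modz (modz a (pw n.+1)) (pw n) = modz a (pw n).
Proof. by rewrite pwS modz_mulr. Qed.

Lemma z2mod (x : Z2) n : modz (z2seq x n) (pw n) = z2seq x n.
Proof. by rewrite {2}(z2coh x n) (z2coh x n) modz_mod. Qed.

Lemma z2_ext (x y : Z2) : (forall n, z2seq x n = z2seq y n) -> x = y.
Proof.
case: x => fx hx; case: y => fy hy /= H.
have E : fx = fy by apply: functional_extensionality.
subst fy; by rewrite (proof_irrelevance _ hx hy).
Qed.

Lemma z2zero_coh n : (fun _ : nat => 0 : int) n = modz 0 (pw n).
Proof. by rewrite mod0z. Qed.
Definition z2zero : Z2 := MkZ2 z2zero_coh.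

Lemma z2one_coh n : modz 1 (pw n) = modz (modz 1 (pw n.+1)) (pw n).
Proof. by rewrite modpwS. Qed.
Definition z2one : Z2 := MkZ2 z2one_coh.

Lemma z2opp_coh (x : Z2) n :
  modz (- z2seq x n) (pw n) = modz (modz (- z2seq x n.+1) (pw n.+1)) (pw n).
Proof. by rewrite modpwS (z2coh x n) modzNm. Qed.
Definition z2opp (x : Z2) : Z2 := MkZ2 (z2opp_coh x).

Lemma z2add_coh (x y : Z2) n :
  modz (z2seq x n + z2seq y n) (pw n)
  = modz (modz (z2seq x n.+1 + z2seq y n.+1) (pw n.+1)) (pw n).
Proof. by rewrite modpwS (z2coh x n) (z2coh y n) modzDm. Qed.
Definition z2add (x y : Z2) : Z2 := MkZ2 (z2add_coh x y).

Lemma z2mul_coh (x y : Z2) n :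
  modz (z2seq x n * z2seq y n) (pw n)
  = modz (modz (z2seq x n.+1 * z2seq y n.+1) (pw n.+1)) (pw n).
Proof. by rewrite modpwS (z2coh x n) (z2coh y n) modzMm. Qed.
Definition z2mul (x y : Z2) : Z2 := MkZ2 (z2mul_coh x y).

(* classical decidable equality and choice (Z_2 has no computable ones) *)
Definition z2eqb (x y : Z2) : bool :=
  if excluded_middle_informative (x = y) then true else false.
Lemma z2eqP : Equality.axiom z2eqb.
Proof.
move=> x y; rewrite /z2eqb; case: excluded_middle_informative => H.
  exact: ReflectT. exact: ReflectF.
Qed.
HB.instance Definition _ := hasDecEq.Build Z2 z2eqP.

Definition cfind (T : Type) (P : pred T) (n : nat) : option T :=
  match excluded_middle_informative (exists x, P x) with
  | left H => Some (proj1_sig (constructive_indefinite_description _ H))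
  | right _ => None
  end.
Lemma cfind_correct (T : Type) (P : pred T) n x : cfind P n = Some x -> P x.
Proof.
rewrite /cfind; case: excluded_middle_informative => // H [<-].
exact: (proj2_sig (constructive_indefinite_description _ H)).
Qed.
Lemma cfind_complete (T : Type) (P : pred T) : (exists x, P x) -> exists n, cfind P n.
Proof. move=> H; exists 0%N; rewrite /cfind; case: excluded_middle_informative => // K; by case: (K H). Qed.
Lemma cfind_ext (T : Type) (P Q : pred T) : P =1 Q -> cfind P =1 cfind Q.
Proof. move=> H; have E : P = Q by apply: functional_extensionality. by rewrite E. Qed.
HB.instance Definition _ :=
  hasChoice.Build Z2 (@cfind_correct Z2) (@cfind_complete Z2) (@cfind_ext Z2).

Lemma z2addA : associative z2add.
Proof. by move=> x y z; apply: z2_ext => n /=; rewrite modzDml modzDmr addrA. Qed.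
Lemma z2addC : commutative z2add.
Proof. by move=> x y; apply: z2_ext => n /=; rewrite addrC. Qed.
Lemma z2add0 : left_id z2zero z2add.
Proof. by move=> x; apply: z2_ext => n /=; rewrite add0r z2mod. Qed.
Lemma z2addN : left_inverse z2zero z2opp z2add.
Proof. by move=> x; apply: z2_ext => n /=; rewrite modzDml addNr mod0z. Qed.
HB.instance Definition _ := GRing.isZmodule.Build Z2 z2addA z2addC z2add0 z2addN.

Lemma z2mulA : associative z2mul.
Proof. by move=> x y z; apply: z2_ext => n /=; rewrite modzMml modzMmr mulrA. Qed.
Lemma z2mulC : commutative z2mul.
Proof. by move=> x y; apply: z2_ext => n /=; rewrite mulrC. Qed.
Lemma z2mul1 : left_id z2one z2mul.
Proof. by move=> x; apply: z2_ext => n /=; rewrite modzMml mul1r z2mod. Qed.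
Lemma z2mulDl : left_distributive z2mul z2add.
Proof. by move=> x y z; apply: z2_ext => n /=; rewrite modzMml modzDm mulrDl. Qed.
Lemma z2one_neq0 : z2one != z2zero.
Proof. by apply/eqP => H; have := congr1 (fun x => z2seq x 1) H. Qed.
HB.instance Definition _ :=
  GRing.Zmodule_isComNzRing.Build Z2 z2mulA z2mulC z2mul1 z2mulDl z2one_neq0.

Definition z2res (x : Z2) : 'F_2 := (z2seq x 1)%:~R.

(* The category C^ for k = F_2.  An object is a commutative ring R     *)
(* together with its residue map pi : R -> F_2 (so k = F_2 = R/m_R).   *)

Definition is_ring_hom (R S : nzRingType) (f : R -> S) : Prop :=
  [/\ f 1 = 1, forall x y, f (x + y) = f x + f y & forall x y, f (x * y) = f x * f y].

Definition mker (R : nzRingType) (pi : R -> 'F_2) : R -> Prop := fun x => pi x = 0.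

(* powers of an ideal: I^0 = R, I^(i+1) = sums of products a*b, a in I, b in I^i *)
Inductive mpow (R : nzRingType) (I : R -> Prop) : nat -> R -> Prop :=
| mpow0 x : mpow I 0 x
| mpowZ i : mpow I i.+1 0
| mpowS i a b y : I a -> mpow I i b -> mpow I i.+1 y -> mpow I i.+1 (a * b + y).

Definition is_ideal (R : nzRingType) (I : R -> Prop) : Prop :=
  [/\ I 0, forall x y, I x -> I y -> I (x + y) & forall r x, I x -> I (r * x)].

Definition fin_gen (R : nzRingType) (I : R -> Prop) : Prop :=
  exists s : seq R, (forall i, (i < size s)%N -> I s`_i) /\
    forall x, I x -> exists c : 'I_(size s) -> R, x = \sum_(i < size s) c i * s`_i.

Definition noetherian (R : nzRingType) : Prop :=
  forall I : R -> Prop, is_ideal I -> fin_gen I.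

(* local with maximal ideal ker pi and residue field F_2 via pi *)
Definition local_res (R : nzRingType) (pi : R -> 'F_2) : Prop :=
  is_ring_hom pi /\ forall x, pi x != 0 -> exists y, x * y = 1 /\ y * x = 1.

(* m-adically separated and complete *)
Definition m_complete (R : nzRingType) (pi : R -> 'F_2) : Prop :=
  (forall x, (forall i, mpow (mker pi) i x) -> x = 0) /\
  (forall x : nat -> R, (forall i, mpow (mker pi) i (x i.+1 - x i)) ->
     exists l, forall i, mpow (mker pi) i (l - x i)).

Definition in_Chat (R : comNzRingType) (pi : R -> 'F_2) : Prop :=
  [/\ local_res pi, noetherian R & m_complete pi].

(* morphisms of C^: ring homs inducing the identity on k (hence local) *)
Definition Chat_hom (R S : comNzRingType) (piR : R -> 'F_2) (piS : S -> 'F_2)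
  (f : R -> S) : Prop :=
  is_ring_hom f /\ forall x, piS (f x) = piR x.

(* The profinite group is G = SL_m(R) (as the predicate det g = 1 on   *)
(* 'M[R]_m), with its profinite topology given by the congruence       *)
(* subgroups ker(SL_m(R) -> SL_m(R/m_R^i)).                            *)

Definition mx_cong (R : nzRingType) (pi : R -> 'F_2) (i : nat) m n
  (A B : 'M[R]_(m, n)) : Prop :=
  forall r c, mpow (mker pi) i (A r c - B r c).

Definition mx_invertible (S : nzRingType) n (A : 'M[S]_n) : Prop :=
  exists B : 'M[S]_n, A *m B = 1%:M /\ B *m A = 1%:M.

Definition is_lift (R S : comNzRingType) (piR : R -> 'F_2) (piS : S -> 'F_2) m n
  (rhobar : 'M[R]_m -> 'M['F_2]_n) (rho : 'M[R]_m -> 'M[S]_n) : Prop :=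
  [/\ forall g h, \det g = 1 -> \det h = 1 -> rho (g *m h) = rho g *m rho h,
      forall g, \det g = 1 -> mx_invertible (rho g),
      forall g, \det g = 1 -> map_mx piS (rho g) = rhobar g &
      (* continuity (for the m_R-adic topology on SL_m(R) and m_S-adic on GL_n(S)) *)
      forall j, exists i, forall g, \det g = 1 ->
        mx_cong piR i g 1%:M -> mx_cong piS j (rho g) 1%:M].

(* strict equivalence: conjugation by an element of I + M_n(m_S) *)
Definition strictly_equiv (R S : comNzRingType) (piS : S -> 'F_2) m n
  (rho1 rho2 : 'M[R]_m -> 'M[S]_n) : Prop :=
  exists P Q : 'M[S]_n,
    [/\ P *m Q = 1%:M, Q *m P = 1%:M, map_mx piS P = 1%:M &
        forall g, \det g = 1 -> rho2 g = P *m rho1 g *m Q].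

(* rho (a lift to Rd) is universal: for every object S of C^, the map
   Hom_C^(Rd, S) -> Def(S), f |-> [GL_n(f) o rho], is a bijection *)
Definition universal_lift (R Rd : comNzRingType) (piR : R -> 'F_2) (piRd : Rd -> 'F_2)
  m n (rhobar : 'M[R]_m -> 'M['F_2]_n) (rho : 'M[R]_m -> 'M[Rd]_n) : Prop :=
  [/\ in_Chat piRd, is_lift piR piRd rhobar rho &
      forall (S : comNzRingType) (piS : S -> 'F_2), in_Chat piS ->
      forall rho' : 'M[R]_m -> 'M[S]_n, is_lift piR piS rhobar rho' ->
      exists f : Rd -> S,
        [/\ Chat_hom piRd piS f,
            strictly_equiv piS (fun g => map_mx f (rho g)) rho' &
            forall f' : Rd -> S, Chat_hom piRd piS f' ->
              strictly_equiv piS (fun g => map_mx f' (rho g)) rho' -> f' =1 f]].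

(* Main.v *)
Require Import Defs.
From HB Require Import structures.
From mathcomp Require Import all_boot all_order all_algebra.
Set Implicit Arguments. Unset Strict Implicit. Unset Printing Implicit Defensive.
Import GRing.Theory.
Local Open Scope ring_scope.

Definition code := seq (seq bool).
Definition mk3 (T : Type) (f : nat -> nat -> T) : seq (seq T) :=
  [:: [:: f 0 0; f 0 1; f 0 2]; [:: f 1 0; f 1 1; f 1 2]; [:: f 2 0; f 2 1; f 2 2]]%N.
Definition cent (c : code) (i j : nat) : bool := nth false (nth [::] c i) j.
Definition cmul (x y : code) : code := mk3 (fun i j =>
  xorb (xorb (cent x i 0 && cent y 0 j) (cent x i 1 && cent y 1 j)) (cent x i 2 && cent y 2 j)).
Definition idc : code := mk3 (fun i j => i == j).
Definition Oel := (int * int)%type.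
Definition oadd (x y : Oel) : Oel := (x.1 + y.1, x.2 + y.2).
Definition omul (x y : Oel) : Oel := (x.1 * y.1 - 2 * (x.2 * y.2), x.1 * y.2 + x.2 * y.1 - x.2 * y.2).
Definition oent (m : seq (seq Oel)) (i j : nat) : Oel := nth (0,0) (nth [::] m i) j.
Definition omm (m n : seq (seq Oel)) : seq (seq Oel) := mk3 (fun i j =>
  oadd (oadd (omul (oent m i 0) (oent n 0 j)) (omul (oent m i 1) (oent n 1 j))) (omul (oent m i 2) (oent n 2 j))).
Definition oid : seq (seq Oel) := mk3 (fun i j => if i == j then (1,0) else (0,0)).
Definition table : seq (code * seq (seq Oel)) := [::
([::[::true;false;false];[::false;true;false];[::true;false;true]], [::[::((Negz 2),(Negz 1));((Posz 0),(Negz 1));((Posz 2),(Negz 0))];[::((Posz 2),(Negz 1));((Posz 3),(Posz 0));((Posz 4),(Posz 2))];[::((Posz 3),(Posz 1));((Posz 2),(Posz 2));((Negz 0),(Posz 2))]]);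
([::[::true;false;false];[::true;true;true];[::true;true;false]], [::[::((Negz 2),(Negz 1));((Posz 0),(Negz 1));((Posz 2),(Negz 0))];[::((Posz 3),(Negz 0));((Posz 3),(Posz 2));((Posz 1),(Posz 2))];[::((Posz 1),(Posz 1));((Negz 0),(Posz 0));((Posz 0),(Posz 0))]]);
([::[::true;false;false];[::false;false;true];[::false;true;true]], [::[::((Negz 2),(Negz 1));((Posz 0),(Negz 1));((Posz 2),(Negz 0))];[::((Posz 4),(Negz 1));((Posz 6),(Posz 2));((Posz 3),(Posz 4))];[::((Posz 2),(Posz 2));((Negz 0),(Posz 2));((Negz 2),(Posz 0))]]);
([::[::true;false;true];[::false;false;true];[::true;true;false]], [::[::((Negz 2),(Negz 0));((Negz 1),(Negz 1));((Posz 1),(Negz 1))];[::((Posz 0),(Negz 2));((Posz 4),(Negz 0));((Posz 5),(Posz 3))];[::((Posz 3),(Posz 1));((Posz 1),(Posz 2));((Negz 1),(Posz 1))]]);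
([::[::true;false;true];[::true;true;true];[::true;false;false]], [::[::((Negz 2),(Negz 0));((Negz 1),(Negz 1));((Posz 1),(Negz 1))];[::((Posz 1),(Negz 1));((Posz 3),(Negz 0));((Posz 5),(Posz 2))];[::((Posz 1),(Posz 0));((Posz 2),(Posz 1));((Posz 0),(Posz 2))]]);
([::[::true;false;true];[::false;true;true];[::false;true;false]], [::[::((Negz 2),(Negz 0));((Negz 1),(Negz 1));((Posz 1),(Negz 1))];[::((Posz 2),(Negz 1));((Posz 3),(Posz 0));((Posz 3),(Posz 2))];[::((Posz 2),(Posz 1));((Posz 1),(Posz 1));((Posz 0),(Posz 1))]]);
([::[::true;true;false];[::true;true;true];[::true;false;true]], [::[::((Negz 2),(Negz 0));((Negz 0),(Negz 1));((Posz 2),(Negz 0))];[::((Negz 0),(Negz 2));((Posz 3),(Negz 0));((Posz 3),(Posz 2))];[::((Posz 3),(Posz 0));((Posz 2),(Posz 2));((Negz 0),(Posz 1))]]);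
([::[::true;true;false];[::false;true;true];[::true;false;false]], [::[::((Negz 2),(Negz 0));((Negz 0),(Negz 1));((Posz 2),(Negz 0))];[::((Posz 2),(Negz 2));((Posz 5),(Posz 1));((Posz 3),(Posz 3))];[::((Posz 3),(Posz 2));((Posz 0),(Posz 2));((Negz 1),(Posz 1))]]);
([::[::true;true;false];[::false;true;false];[::false;false;true]], [::[::((Negz 2),(Negz 0));((Negz 0),(Negz 1));((Posz 2),(Negz 0))];[::((Posz 2),(Negz 0));((Posz 3),(Posz 1));((Posz 2),(Posz 3))];[::((Posz 0),(Posz 0));((Posz 0),(Posz 0));((Negz 0),(Posz 0))]]);
([::[::true;true;false];[::false;false;true];[::false;true;false]], [::[::((Negz 2),(Posz 0));((Negz 2),(Negz 1));((Posz 0),(Negz 1))];[::((Negz 1),(Negz 2));((Posz 2),(Negz 1));((Posz 3),(Posz 0))];[::((Posz 2),(Negz 0));((Posz 3),(Posz 1));((Posz 2),(Posz 2))]]);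
([::[::true;true;false];[::true;false;false];[::true;false;true]], [::[::((Negz 2),(Posz 0));((Negz 2),(Negz 1));((Posz 0),(Negz 1))];[::((Negz 0),(Negz 3));((Posz 4),(Negz 1));((Posz 6),(Posz 2))];[::((Posz 3),(Posz 1));((Posz 2),(Posz 2));((Negz 0),(Posz 2))]]);
([::[::true;true;false];[::false;true;true];[::true;true;true]], [::[::((Negz 2),(Posz 0));((Negz 2),(Negz 1));((Posz 0),(Negz 1))];[::((Posz 0),(Negz 1));((Posz 3),(Negz 0));((Posz 3),(Posz 2))];[::((Posz 1),(Posz 0));((Posz 1),(Posz 1));((Negz 0),(Posz 0))]]);
([::[::true;false;true];[::false;true;false];[::true;true;false]], [::[::((Negz 2),(Posz 0));((Negz 1),(Negz 1));((Posz 1),(Negz 0))];[::((Negz 1),(Negz 3));((Posz 3),(Negz 1));((Posz 4),(Posz 1))];[::((Posz 3),(Posz 0));((Posz 3),(Posz 2));((Posz 0),(Posz 2))]]);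
([::[::true;false;true];[::true;false;false];[::true;true;true]], [::[::((Negz 2),(Posz 0));((Negz 1),(Negz 1));((Posz 1),(Negz 0))];[::((Negz 0),(Negz 1));((Posz 2),(Posz 0));((Posz 0),(Posz 1))];[::((Posz 1),(Negz 0));((Posz 1),(Posz 0));((Posz 1),(Posz 0))]]);
([::[::true;false;true];[::false;true;true];[::false;false;true]], [::[::((Negz 2),(Posz 0));((Negz 1),(Negz 1));((Posz 1),(Negz 0))];[::((Posz 0),(Negz 2));((Posz 5),(Posz 0));((Posz 3),(Posz 3))];[::((Posz 2),(Posz 1));((Posz 0),(Posz 2));((Negz 2),(Posz 0))]]);
([::[::false;true;true];[::true;true;false];[::false;false;true]], [::[::((Negz 1),(Negz 1));((Posz 1),(Negz 1));((Posz 3),(Posz 0))];[::((Posz 3),(Negz 0));((Posz 5),(Posz 2));((Posz 2),(Posz 4))];[::((Posz 2),(Posz 1));((Posz 0),(Posz 2));((Negz 2),(Posz 0))]]);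
([::[::false;true;true];[::true;true;true];[::true;false;true]], [::[::((Negz 1),(Negz 1));((Posz 1),(Negz 1));((Posz 3),(Posz 0))];[::((Posz 3),(Posz 0));((Posz 3),(Posz 2));((Posz 1),(Posz 2))];[::((Posz 1),(Posz 1));((Posz 0),(Posz 1));((Negz 0),(Posz 1))]]);
([::[::false;true;true];[::false;true;false];[::true;false;false]], [::[::((Negz 1),(Negz 1));((Posz 1),(Negz 1));((Posz 3),(Posz 0))];[::((Posz 4),(Negz 0));((Posz 5),(Posz 3));((Posz 0),(Posz 3))];[::((Posz 1),(Posz 2));((Negz 1),(Posz 1));((Negz 1),(Negz 0))]]);
([::[::false;true;true];[::false;false;true];[::true;true;false]], [::[::((Negz 1),(Negz 1));((Posz 1),(Negz 0));((Posz 1),(Posz 0))];[::((Posz 2),(Posz 0));((Posz 0),(Posz 1));((Negz 0),(Negz 0))];[::((Posz 1),(Posz 0));((Posz 1),(Posz 0));((Posz 2),(Posz 1))]]);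
([::[::false;true;true];[::true;false;true];[::true;false;false]], [::[::((Negz 1),(Negz 1));((Posz 1),(Negz 0));((Posz 1),(Posz 0))];[::((Posz 3),(Negz 1));((Posz 4),(Posz 1));((Posz 3),(Posz 2))];[::((Posz 3),(Posz 2));((Posz 0),(Posz 2));((Negz 1),(Posz 1))]]);
([::[::false;true;true];[::true;true;true];[::false;true;false]], [::[::((Negz 1),(Negz 1));((Posz 1),(Negz 0));((Posz 1),(Posz 0))];[::((Posz 5),(Posz 0));((Posz 3),(Posz 3));((Negz 0),(Posz 2))];[::((Posz 0),(Posz 2));((Negz 2),(Posz 0));((Negz 1),(Negz 1))]]);
([::[::false;true;false];[::true;true;true];[::true;true;false]], [::[::((Negz 1),(Negz 0));((Negz 0),(Negz 0));((Posz 0),(Negz 0))];[::((Negz 0),(Negz 1));((Posz 1),(Negz 1));((Posz 3),(Posz 0))];[::((Posz 3),(Posz 0));((Posz 3),(Posz 2));((Posz 0),(Posz 2))]]);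
([::[::false;true;false];[::false;false;true];[::true;false;true]], [::[::((Negz 1),(Negz 0));((Negz 0),(Negz 0));((Posz 0),(Negz 0))];[::((Posz 2),(Posz 0));((Posz 0),(Posz 0));((Posz 1),(Posz 0))];[::((Negz 0),(Posz 0));((Posz 0),(Negz 0));((Posz 1),(Posz 0))]]);
([::[::false;true;false];[::true;false;false];[::false;true;true]], [::[::((Negz 1),(Negz 0));((Negz 0),(Negz 0));((Posz 0),(Negz 0))];[::((Posz 3),(Negz 1));((Posz 4),(Posz 1));((Posz 2),(Posz 2))];[::((Posz 2),(Posz 2));((Negz 0),(Posz 1));((Negz 0),(Posz 0))]]);
([::[::false;false;true];[::false;true;false];[::true;false;true]], [::[::((Negz 1),(Negz 0));((Posz 0),(Negz 1));((Posz 3),(Posz 0))];[::((Posz 0),(Negz 0));((Posz 3),(Posz 1));((Posz 0),(Posz 2))];[::((Posz 1),(Posz 0));((Posz 0),(Posz 1));((Negz 0),(Posz 0))]]);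
([::[::false;false;true];[::true;false;false];[::true;true;false]], [::[::((Negz 1),(Negz 0));((Posz 0),(Negz 1));((Posz 3),(Posz 0))];[::((Posz 1),(Negz 1));((Posz 4),(Posz 1));((Posz 2),(Posz 3))];[::((Posz 3),(Posz 1));((Posz 1),(Posz 2));((Negz 1),(Posz 1))]]);
([::[::false;false;true];[::true;true;true];[::false;true;true]], [::[::((Negz 1),(Negz 0));((Posz 0),(Negz 1));((Posz 3),(Posz 0))];[::((Posz 3),(Negz 0));((Posz 5),(Posz 2));((Posz 1),(Posz 4))];[::((Posz 0),(Posz 1));((Negz 0),(Posz 1));((Negz 2),(Negz 0))]]);
([::[::false;true;false];[::true;false;true];[::false;false;true]], [::[::((Negz 1),(Posz 1));((Negz 2),(Negz 0));((Negz 1),(Negz 1))];[::((Negz 2),(Negz 2));((Posz 2),(Negz 1));((Posz 3),(Posz 0))];[::((Posz 2),(Negz 0));((Posz 2),(Posz 1));((Posz 1),(Posz 1))]]);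
([::[::false;true;false];[::true;false;false];[::true;true;true]], [::[::((Negz 1),(Posz 1));((Negz 2),(Negz 0));((Negz 1),(Negz 1))];[::((Negz 2),(Negz 1));((Posz 0),(Negz 2));((Posz 4),(Negz 0))];[::((Posz 1),(Negz 0));((Posz 3),(Posz 1));((Posz 1),(Posz 2))]]);
([::[::false;true;false];[::false;true;true];[::true;true;false]], [::[::((Negz 1),(Posz 1));((Negz 2),(Negz 0));((Negz 1),(Negz 1))];[::((Negz 1),(Negz 2));((Posz 1),(Negz 1));((Posz 3),(Negz 0))];[::((Posz 1),(Posz 0));((Posz 1),(Posz 0));((Posz 2),(Posz 1))]]);
([::[::false;false;true];[::false;true;true];[::true;true;true]], [::[::((Negz 1),(Posz 1));((Negz 1),(Negz 0));((Negz 0),(Negz 0))];[::((Negz 3),(Negz 1));((Negz 0),(Negz 1));((Posz 1),(Negz 1))];[::((Posz 1),(Negz 1));((Posz 3),(Posz 0));((Posz 3),(Posz 2))]]);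
([::[::false;false;true];[::true;true;false];[::true;false;true]], [::[::((Negz 1),(Posz 1));((Negz 1),(Negz 0));((Negz 0),(Negz 0))];[::((Negz 2),(Negz 3));((Posz 3),(Negz 1));((Posz 4),(Posz 1))];[::((Posz 3),(Posz 0));((Posz 2),(Posz 2));((Negz 0),(Posz 1))]]);
([::[::false;false;true];[::true;false;false];[::false;true;false]], [::[::((Negz 1),(Posz 1));((Negz 1),(Negz 0));((Negz 0),(Negz 0))];[::((Negz 0),(Negz 1));((Posz 2),(Posz 0));((Posz 0),(Posz 0))];[::((Posz 0),(Posz 0));((Negz 0),(Posz 0));((Posz 0),(Negz 0))]]);
([::[::true;false;false];[::true;true;false];[::false;true;true]], [::[::((Negz 0),(Negz 1));((Posz 2),(Negz 0));((Posz 2),(Posz 1))];[::((Posz 3),(Negz 0));((Posz 3),(Posz 2));((Posz 0),(Posz 1))];[::((Posz 2),(Posz 2));((Negz 0),(Posz 1));((Negz 0),(Posz 0))]]);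
([::[::true;false;false];[::true;false;true];[::false;true;false]], [::[::((Negz 0),(Negz 1));((Posz 2),(Negz 0));((Posz 2),(Posz 1))];[::((Posz 3),(Posz 1));((Posz 2),(Posz 3));((Negz 2),(Posz 1))];[::((Posz 0),(Posz 0));((Negz 0),(Posz 0));((Posz 0),(Negz 0))]]);
([::[::true;false;false];[::true;true;true];[::false;false;true]], [::[::((Negz 0),(Negz 1));((Posz 2),(Negz 0));((Posz 2),(Posz 1))];[::((Posz 5),(Posz 1));((Posz 3),(Posz 3));((Negz 0),(Posz 2))];[::((Posz 0),(Posz 2));((Negz 1),(Posz 1));((Negz 2),(Negz 0))]]);
([::[::true;false;true];[::false;true;false];[::false;true;true]], [::[::((Negz 0),(Negz 0));((Posz 0),(Negz 0));((Posz 1),(Negz 0))];[::((Posz 0),(Posz 0));((Posz 1),(Posz 0));((Posz 2),(Posz 1))];[::((Posz 0),(Negz 0));((Posz 1),(Posz 0));((Posz 1),(Posz 1))]]);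
([::[::true;false;true];[::true;true;false];[::true;false;false]], [::[::((Negz 0),(Negz 0));((Posz 0),(Negz 0));((Posz 1),(Negz 0))];[::((Posz 1),(Negz 1));((Posz 3),(Posz 0));((Posz 4),(Posz 2))];[::((Posz 3),(Posz 2));((Posz 0),(Posz 2));((Negz 1),(Posz 1))]]);
([::[::true;false;true];[::false;false;true];[::true;true;true]], [::[::((Negz 0),(Negz 0));((Posz 0),(Negz 0));((Posz 1),(Negz 0))];[::((Posz 4),(Posz 1));((Posz 2),(Posz 2));((Posz 1),(Posz 2))];[::((Negz 0),(Posz 1));((Negz 0),(Posz 0));((Negz 0),(Posz 0))]]);
([::[::true;true;false];[::false;false;true];[::true;false;false]], [::[::((Negz 0),(Negz 0));((Posz 1),(Posz 0));((Posz 0),(Posz 0))];[::((Posz 0),(Negz 0));((Posz 0),(Posz 0));((Posz 1),(Posz 0))];[::((Posz 1),(Posz 0));((Posz 0),(Posz 0));((Posz 0),(Posz 0))]]);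
([::[::true;true;false];[::false;true;false];[::false;true;true]], [::[::((Negz 0),(Negz 0));((Posz 1),(Posz 0));((Posz 0),(Posz 0))];[::((Posz 2),(Negz 0));((Posz 1),(Posz 1));((Posz 0),(Posz 0))];[::((Posz 2),(Posz 2));((Negz 0),(Posz 1));((Negz 0),(Posz 0))]]);
([::[::true;true;false];[::true;false;true];[::true;true;true]], [::[::((Negz 0),(Negz 0));((Posz 1),(Posz 0));((Posz 0),(Posz 0))];[::((Posz 3),(Posz 1));((Posz 0),(Posz 2));((Negz 0),(Posz 0))];[::((Negz 0),(Posz 0));((Negz 0),(Negz 0));((Posz 1),(Posz 0))]]);
([::[::true;false;false];[::true;true;false];[::true;true;true]], [::[::((Negz 0),(Posz 0));((Negz 1),(Negz 0));((Posz 0),(Negz 1))];[::((Negz 0),(Negz 0));((Posz 1),(Negz 1));((Posz 4),(Posz 1))];[::((Posz 1),(Negz 0));((Posz 3),(Posz 1));((Posz 1),(Posz 2))]]);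
([::[::true;false;false];[::false;true;true];[::true;false;true]], [::[::((Negz 0),(Posz 0));((Negz 1),(Negz 0));((Posz 0),(Negz 1))];[::((Posz 0),(Negz 1));((Posz 3),(Negz 0));((Posz 5),(Posz 2))];[::((Posz 1),(Posz 1));((Posz 0),(Posz 1));((Negz 0),(Posz 1))]]);
([::[::true;false;false];[::false;false;true];[::false;true;false]], [::[::((Negz 0),(Posz 0));((Negz 1),(Negz 0));((Posz 0),(Negz 1))];[::((Posz 0),(Posz 0));((Posz 0),(Negz 0));((Posz 3),(Posz 1))];[::((Posz 0),(Posz 0));((Posz 1),(Posz 0));((Posz 0),(Posz 1))]]);
([::[::true;true;true];[::false;false;true];[::true;false;true]], [::[::((Negz 0),(Posz 0));((Negz 0),(Negz 0));((Posz 1),(Posz 0))];[::((Negz 1),(Negz 1));((Posz 2),(Negz 0));((Posz 1),(Posz 1))];[::((Posz 3),(Posz 0));((Posz 2),(Posz 2));((Negz 0),(Posz 1))]]);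
([::[::true;true;true];[::true;false;false];[::true;true;false]], [::[::((Negz 0),(Posz 0));((Negz 0),(Negz 0));((Posz 1),(Posz 0))];[::((Negz 0),(Posz 0));((Posz 0),(Negz 0));((Posz 0),(Posz 0))];[::((Negz 0),(Negz 0));((Posz 1),(Posz 0));((Posz 0),(Posz 0))]]);
([::[::true;true;true];[::false;true;false];[::false;true;true]], [::[::((Negz 0),(Posz 0));((Negz 0),(Negz 0));((Posz 1),(Posz 0))];[::((Posz 2),(Negz 0));((Posz 3),(Posz 1));((Posz 0),(Posz 2))];[::((Posz 0),(Posz 1));((Negz 0),(Posz 0));((Negz 0),(Negz 0))]]);
([::[::true;true;false];[::true;false;true];[::false;true;false]], [::[::((Negz 0),(Posz 0));((Negz 0),(Posz 0));((Negz 1),(Negz 0))];[::((Negz 0),(Negz 1));((Posz 0),(Negz 1));((Posz 3),(Negz 0))];[::((Posz 2),(Posz 1));((Posz 1),(Posz 1));((Posz 0),(Posz 1))]]);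
([::[::true;true;false];[::true;true;true];[::false;true;true]], [::[::((Negz 0),(Posz 0));((Negz 0),(Posz 0));((Negz 1),(Negz 0))];[::((Negz 0),(Negz 0));((Negz 0),(Negz 0));((Posz 1),(Negz 1))];[::((Posz 0),(Negz 0));((Posz 1),(Negz 0));((Posz 3),(Posz 1))]]);
([::[::true;true;false];[::true;false;false];[::false;false;true]], [::[::((Negz 0),(Posz 0));((Negz 0),(Posz 0));((Negz 1),(Negz 0))];[::((Posz 1),(Posz 0));((Posz 0),(Posz 0));((Posz 0),(Negz 0))];[::((Posz 0),(Posz 0));((Posz 0),(Posz 0));((Posz 1),(Posz 0))]]);
([::[::true;false;true];[::true;true;true];[::false;false;true]], [::[::((Negz 0),(Posz 0));((Posz 0),(Negz 0));((Posz 1),(Posz 0))];[::((Negz 2),(Negz 1));((Posz 1),(Negz 0));((Posz 1),(Posz 0))];[::((Posz 2),(Negz 0));((Posz 2),(Posz 1));((Posz 1),(Posz 1))]]);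
([::[::true;false;true];[::true;false;false];[::false;true;true]], [::[::((Negz 0),(Posz 0));((Posz 0),(Negz 0));((Posz 1),(Posz 0))];[::((Posz 1),(Negz 1));((Posz 4),(Posz 1));((Posz 2),(Posz 2))];[::((Posz 2),(Posz 2));((Negz 0),(Posz 2));((Negz 2),(Posz 0))]]);
([::[::true;false;true];[::true;true;false];[::false;true;false]], [::[::((Negz 0),(Posz 0));((Posz 0),(Negz 0));((Posz 1),(Posz 0))];[::((Posz 1),(Posz 1));((Posz 1),(Posz 2));((Negz 1),(Posz 1))];[::((Negz 1),(Negz 0));((Negz 0),(Negz 0));((Posz 0),(Negz 0))]]);
([::[::true;false;false];[::false;true;true];[::false;false;true]], [::[::((Negz 0),(Posz 0));((Posz 0),(Posz 0));((Posz 0),(Posz 0))];[::((Negz 1),(Posz 0));((Negz 2),(Negz 0));((Negz 0),(Negz 1))];[::((Posz 0),(Negz 1));((Posz 2),(Negz 0));((Posz 3),(Posz 1))]]);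
([::[::true;false;false];[::true;false;true];[::true;true;false]], [::[::((Negz 0),(Posz 0));((Posz 0),(Posz 0));((Posz 0),(Posz 0))];[::((Negz 0),(Negz 2));((Posz 2),(Negz 0));((Posz 3),(Posz 1))];[::((Posz 3),(Posz 1));((Posz 1),(Posz 2));((Negz 1),(Posz 1))]]);
([::[::true;false;false];[::false;true;false];[::true;true;true]], [::[::((Negz 0),(Posz 0));((Posz 0),(Posz 0));((Posz 0),(Posz 0))];[::((Posz 2),(Posz 0));((Posz 1),(Posz 2));((Negz 1),(Posz 1))];[::((Negz 0),(Posz 1));((Negz 2),(Negz 0));((Negz 0),(Negz 1))]]);
([::[::true;true;true];[::false;true;true];[::false;true;false]], [::[::((Negz 0),(Posz 1));((Negz 2),(Negz 0));((Negz 0),(Negz 1))];[::((Negz 3),(Negz 0));((Negz 0),(Negz 2));((Posz 3),(Negz 0))];[::((Posz 0),(Negz 1));((Posz 3),(Posz 0));((Posz 2),(Posz 2))]]);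
([::[::true;true;true];[::true;false;true];[::true;true;false]], [::[::((Negz 0),(Posz 1));((Negz 2),(Negz 0));((Negz 0),(Negz 1))];[::((Negz 2),(Negz 2));((Posz 2),(Negz 2));((Posz 5),(Posz 1))];[::((Posz 3),(Posz 0));((Posz 3),(Posz 2));((Posz 0),(Posz 2))]]);
([::[::true;true;true];[::false;false;true];[::true;false;false]], [::[::((Negz 0),(Posz 1));((Negz 2),(Negz 0));((Negz 0),(Negz 1))];[::((Posz 0),(Negz 0));((Posz 2),(Negz 0));((Posz 3),(Posz 1))];[::((Negz 0),(Posz 0));((Posz 0),(Posz 0));((Posz 0),(Posz 0))]]);
([::[::true;true;true];[::false;true;false];[::false;false;true]], [::[::((Negz 0),(Posz 1));((Negz 0),(Posz 0));((Negz 0),(Posz 0))];[::((Negz 3),(Negz 1));((Negz 0),(Negz 1));((Posz 0),(Negz 1))];[::((Posz 2),(Negz 0));((Posz 2),(Posz 1));((Posz 1),(Posz 1))]]);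
([::[::true;true;true];[::false;true;true];[::true;false;true]], [::[::((Negz 0),(Posz 1));((Negz 0),(Posz 0));((Negz 0),(Posz 0))];[::((Negz 1),(Negz 0));((Negz 0),(Negz 0));((Negz 0),(Negz 0))];[::((Negz 0),(Negz 0));((Posz 0),(Negz 0));((Posz 1),(Negz 0))]]);
([::[::true;true;true];[::true;true;false];[::true;false;false]], [::[::((Negz 0),(Posz 1));((Negz 0),(Posz 0));((Negz 0),(Posz 0))];[::((Negz 0),(Negz 1));((Posz 1),(Posz 0));((Posz 0),(Posz 0))];[::((Posz 1),(Posz 0));((Posz 0),(Posz 0));((Posz 0),(Posz 0))]]);
([::[::true;true;true];[::true;true;false];[::false;true;false]], [::[::((Negz 0),(Posz 2));((Negz 2),(Posz 0));((Negz 2),(Negz 1))];[::((Negz 4),(Negz 2));((Negz 0),(Negz 3));((Posz 4),(Negz 1))];[::((Posz 2),(Negz 0));((Posz 3),(Posz 1));((Posz 2),(Posz 2))]]);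
([::[::true;true;true];[::true;false;false];[::false;false;true]], [::[::((Negz 0),(Posz 2));((Negz 2),(Posz 0));((Negz 2),(Negz 1))];[::((Negz 4),(Negz 1));((Negz 1),(Negz 2));((Posz 2),(Negz 1))];[::((Posz 0),(Negz 1));((Posz 2),(Negz 0));((Posz 3),(Posz 1))]]);
([::[::true;true;true];[::true;false;true];[::false;true;true]], [::[::((Negz 0),(Posz 2));((Negz 2),(Posz 0));((Negz 2),(Negz 1))];[::((Negz 2),(Negz 1));((Posz 0),(Negz 1));((Posz 3),(Negz 0))];[::((Posz 0),(Negz 0));((Posz 1),(Posz 0));((Posz 1),(Posz 1))]]);
([::[::false;false;true];[::true;false;true];[::false;true;true]], [::[::((Posz 0),(Negz 1));((Posz 2),(Negz 0));((Posz 3),(Posz 1))];[::((Posz 3),(Posz 0));((Posz 4),(Posz 2));((Posz 1),(Posz 3))];[::((Posz 2),(Posz 2));((Negz 0),(Posz 2));((Negz 2),(Posz 0))]]);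
([::[::false;false;true];[::true;true;false];[::true;false;false]], [::[::((Posz 0),(Negz 1));((Posz 2),(Negz 0));((Posz 3),(Posz 1))];[::((Posz 3),(Posz 2));((Posz 1),(Posz 2));((Negz 1),(Posz 1))];[::((Negz 0),(Posz 0));((Posz 0),(Posz 0));((Posz 0),(Posz 0))]]);
([::[::false;false;true];[::false;true;false];[::true;true;true]], [::[::((Posz 0),(Negz 1));((Posz 2),(Negz 0));((Posz 3),(Posz 1))];[::((Posz 6),(Posz 2));((Posz 3),(Posz 4));((Negz 1),(Posz 3))];[::((Negz 0),(Posz 2));((Negz 2),(Posz 0));((Negz 2),(Negz 1))]]);
([::[::false;true;false];[::true;false;true];[::false;true;true]], [::[::((Posz 0),(Negz 1));((Posz 3),(Posz 0));((Posz 2),(Posz 2))];[::((Posz 3),(Posz 1));((Posz 0),(Posz 2));((Negz 2),(Posz 0))];[::((Posz 0),(Posz 1));((Negz 0),(Posz 0));((Negz 0),(Negz 0))]]);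
([::[::false;true;false];[::false;false;true];[::true;false;false]], [::[::((Posz 0),(Negz 1));((Posz 3),(Posz 0));((Posz 2),(Posz 2))];[::((Posz 4),(Posz 1));((Posz 2),(Posz 3));((Negz 2),(Posz 1))];[::((Posz 1),(Posz 2));((Negz 1),(Posz 1));((Negz 1),(Negz 0))]]);
([::[::false;true;false];[::true;true;false];[::true;true;true]], [::[::((Posz 0),(Negz 1));((Posz 3),(Posz 0));((Posz 2),(Posz 2))];[::((Posz 5),(Posz 2));((Posz 1),(Posz 4));((Negz 3),(Posz 1))];[::((Negz 0),(Posz 1));((Negz 2),(Negz 0));((Negz 0),(Negz 1))]]);
([::[::false;true;true];[::true;false;true];[::true;true;true]], [::[::((Posz 0),(Negz 0));((Posz 1),(Negz 0));((Posz 3),(Posz 1))];[::((Posz 1),(Posz 0));((Posz 2),(Posz 1));((Negz 0),(Posz 2))];[::((Posz 1),(Posz 0));((Posz 1),(Posz 1));((Negz 0),(Posz 0))]]);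
([::[::false;true;true];[::false;true;false];[::true;true;false]], [::[::((Posz 0),(Negz 0));((Posz 1),(Negz 0));((Posz 3),(Posz 1))];[::((Posz 2),(Posz 2));((Posz 1),(Posz 2));((Negz 1),(Posz 2))];[::((Negz 0),(Posz 0));((Negz 0),(Posz 0));((Negz 1),(Negz 0))]]);
([::[::false;true;true];[::true;false;false];[::false;false;true]], [::[::((Posz 0),(Negz 0));((Posz 1),(Negz 0));((Posz 3),(Posz 1))];[::((Posz 3),(Posz 0));((Posz 4),(Posz 2));((Posz 0),(Posz 3))];[::((Posz 0),(Posz 2));((Negz 1),(Posz 1));((Negz 2),(Negz 0))]]);
([::[::false;true;true];[::true;true;false];[::false;true;false]], [::[::((Posz 0),(Negz 0));((Posz 1),(Posz 0));((Posz 1),(Posz 1))];[::((Posz 1),(Negz 0));((Posz 1),(Posz 0));((Posz 0),(Posz 0))];[::((Posz 2),(Posz 1));((Posz 1),(Posz 1));((Posz 0),(Posz 1))]]);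
([::[::false;true;true];[::true;false;false];[::true;false;true]], [::[::((Posz 0),(Negz 0));((Posz 1),(Posz 0));((Posz 1),(Posz 1))];[::((Posz 1),(Posz 2));((Negz 1),(Posz 1));((Negz 3),(Negz 0))];[::((Negz 0),(Negz 0));((Posz 0),(Negz 0));((Posz 1),(Negz 0))]]);
([::[::false;true;true];[::false;false;true];[::true;true;true]], [::[::((Posz 0),(Negz 0));((Posz 1),(Posz 0));((Posz 1),(Posz 1))];[::((Posz 4),(Posz 1));((Posz 2),(Posz 2));((Negz 0),(Posz 2))];[::((Negz 0),(Posz 2));((Negz 2),(Posz 0));((Negz 2),(Negz 1))]]);
([::[::false;true;false];[::false;true;true];[::true;false;false]], [::[::((Posz 0),(Posz 0));((Negz 0),(Posz 0));((Posz 0),(Negz 0))];[::((Negz 1),(Posz 1));((Negz 2),(Negz 1));((Posz 1),(Negz 0))];[::((Negz 0),(Negz 1));((Posz 2),(Negz 0));((Posz 2),(Posz 1))]]);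
([::[::false;true;false];[::true;true;false];[::true;false;true]], [::[::((Posz 0),(Posz 0));((Negz 0),(Posz 0));((Posz 0),(Negz 0))];[::((Negz 0),(Negz 1));((Posz 1),(Negz 1));((Posz 4),(Posz 1))];[::((Posz 3),(Posz 1));((Posz 2),(Posz 2));((Negz 0),(Posz 2))]]);
([::[::false;true;false];[::true;true;true];[::false;false;true]], [::[::((Posz 0),(Posz 0));((Negz 0),(Posz 0));((Posz 0),(Negz 0))];[::((Posz 3),(Posz 1));((Posz 1),(Posz 1));((Posz 1),(Posz 2))];[::((Negz 1),(Posz 1));((Negz 1),(Negz 0));((Negz 0),(Negz 0))]]);
([::[::false;false;true];[::true;true;true];[::false;true;false]], [::[::((Posz 0),(Posz 0));((Posz 0),(Posz 0));((Negz 0),(Posz 0))];[::((Negz 2),(Negz 0));((Negz 0),(Negz 1));((Posz 1),(Negz 1))];[::((Posz 2),(Negz 0));((Posz 3),(Posz 1));((Posz 2),(Posz 2))]]);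
([::[::false;false;true];[::true;false;true];[::true;true;false]], [::[::((Posz 0),(Posz 0));((Posz 0),(Posz 0));((Negz 0),(Posz 0))];[::((Posz 1),(Posz 2));((Negz 1),(Posz 1));((Negz 2),(Negz 1))];[::((Negz 2),(Negz 0));((Negz 0),(Negz 1));((Posz 2),(Negz 0))]]);
([::[::false;false;true];[::false;true;true];[::true;false;false]], [::[::((Posz 0),(Posz 0));((Posz 0),(Posz 0));((Negz 0),(Posz 0))];[::((Posz 2),(Negz 0));((Posz 3),(Posz 1));((Posz 1),(Posz 1))];[::((Posz 1),(Posz 2));((Negz 1),(Posz 1));((Negz 1),(Negz 0))]]);
([::[::false;false;true];[::true;true;true];[::true;false;false]], [::[::((Posz 0),(Posz 0));((Posz 0),(Posz 0));((Posz 1),(Posz 0))];[::((Negz 0),(Posz 0));((Negz 0),(Posz 0));((Negz 0),(Posz 0))];[::((Posz 1),(Posz 0));((Posz 0),(Posz 0));((Posz 0),(Posz 0))]]);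
([::[::false;false;true];[::false;true;true];[::true;true;false]], [::[::((Posz 0),(Posz 0));((Posz 0),(Posz 0));((Posz 1),(Posz 0))];[::((Posz 0),(Posz 0));((Posz 1),(Posz 0));((Posz 1),(Posz 2))];[::((Negz 0),(Posz 0));((Negz 0),(Posz 0));((Negz 1),(Negz 0))]]);
([::[::false;false;true];[::true;false;true];[::false;true;false]], [::[::((Posz 0),(Posz 0));((Posz 0),(Posz 0));((Posz 1),(Posz 0))];[::((Posz 1),(Posz 0));((Posz 0),(Posz 0));((Posz 1),(Posz 1))];[::((Posz 0),(Posz 0));((Posz 1),(Posz 0));((Posz 0),(Posz 1))]]);
([::[::false;true;false];[::true;true;false];[::false;false;true]], [::[::((Posz 0),(Posz 0));((Posz 1),(Posz 0));((Posz 0),(Posz 1))];[::((Negz 0),(Posz 0));((Negz 0),(Posz 0));((Negz 1),(Negz 1))];[::((Posz 0),(Posz 0));((Posz 0),(Posz 0));((Posz 1),(Posz 0))]]);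
([::[::false;true;false];[::false;true;true];[::true;false;true]], [::[::((Posz 0),(Posz 0));((Posz 1),(Posz 0));((Posz 0),(Posz 1))];[::((Posz 0),(Posz 0));((Posz 1),(Posz 1));((Negz 0),(Posz 0))];[::((Posz 1),(Posz 0));((Posz 0),(Posz 1));((Negz 0),(Posz 0))]]);
([::[::false;true;false];[::true;true;true];[::true;false;false]], [::[::((Posz 0),(Posz 0));((Posz 1),(Posz 0));((Posz 0),(Posz 1))];[::((Posz 1),(Posz 0));((Posz 1),(Posz 2));((Negz 2),(Posz 0))];[::((Negz 0),(Posz 0));((Negz 1),(Negz 0));((Posz 0),(Negz 1))]]);
([::[::false;true;true];[::true;false;false];[::false;true;false]], [::[::((Posz 0),(Posz 1));((Negz 0),(Posz 0));((Negz 0),(Negz 0))];[::((Negz 2),(Posz 0));((Negz 1),(Negz 1));((Posz 2),(Negz 0))];[::((Posz 0),(Negz 1));((Posz 3),(Posz 0));((Posz 2),(Posz 2))]]);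
([::[::false;true;true];[::false;false;true];[::true;false;true]], [::[::((Posz 0),(Posz 1));((Negz 0),(Posz 0));((Negz 0),(Negz 0))];[::((Negz 1),(Negz 1));((Posz 2),(Negz 0));((Posz 3),(Posz 1))];[::((Posz 1),(Posz 0));((Posz 0),(Posz 1));((Negz 0),(Posz 0))]]);
([::[::false;true;true];[::true;true;false];[::true;true;true]], [::[::((Posz 0),(Posz 1));((Negz 0),(Posz 0));((Negz 0),(Negz 0))];[::((Negz 0),(Posz 0));((Negz 0),(Posz 0));((Posz 0),(Negz 0))];[::((Negz 0),(Posz 0));((Negz 0),(Negz 0));((Posz 1),(Posz 0))]]);
([::[::false;true;true];[::false;true;false];[::true;true;true]], [::[::((Posz 0),(Posz 1));((Negz 0),(Posz 1));((Negz 2),(Negz 0))];[::((Negz 3),(Negz 0));((Negz 2),(Negz 2));((Posz 2),(Negz 2))];[::((Posz 1),(Negz 1));((Posz 3),(Posz 0));((Posz 3),(Posz 2))]]);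
([::[::false;true;true];[::true;false;false];[::true;true;false]], [::[::((Posz 0),(Posz 1));((Negz 0),(Posz 1));((Negz 2),(Negz 0))];[::((Negz 0),(Negz 1));((Posz 0),(Negz 0));((Posz 2),(Negz 0))];[::((Posz 1),(Posz 1));((Negz 0),(Posz 0));((Posz 0),(Posz 0))]]);
([::[::false;true;true];[::true;false;true];[::false;false;true]], [::[::((Posz 0),(Posz 1));((Negz 0),(Posz 1));((Negz 2),(Negz 0))];[::((Negz 0),(Posz 1));((Negz 3),(Negz 0));((Negz 0),(Negz 2))];[::((Negz 1),(Negz 0));((Posz 0),(Negz 1));((Posz 3),(Posz 0))]]);
([::[::false;true;false];[::false;false;true];[::true;true;true]], [::[::((Posz 0),(Posz 2));((Negz 2),(Posz 0));((Negz 1),(Negz 1))];[::((Negz 5),(Negz 1));((Negz 1),(Negz 3));((Posz 3),(Negz 1))];[::((Posz 1),(Negz 1));((Posz 3),(Posz 0));((Posz 3),(Posz 2))]]);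
([::[::false;true;false];[::true;false;true];[::true;false;false]], [::[::((Posz 0),(Posz 2));((Negz 2),(Posz 0));((Negz 1),(Negz 1))];[::((Negz 2),(Negz 1));((Posz 0),(Negz 2));((Posz 5),(Posz 0))];[::((Posz 1),(Posz 0));((Posz 2),(Posz 1));((Posz 0),(Posz 2))]]);
([::[::false;true;false];[::true;true;false];[::false;true;true]], [::[::((Posz 0),(Posz 2));((Negz 2),(Posz 0));((Negz 1),(Negz 1))];[::((Negz 2),(Posz 0));((Negz 0),(Negz 1));((Posz 2),(Posz 0))];[::((Negz 1),(Negz 1));((Posz 1),(Negz 0));((Posz 1),(Posz 0))]]);
([::[::false;false;true];[::true;false;true];[::true;true;true]], [::[::((Posz 0),(Posz 2));((Negz 1),(Posz 1));((Negz 2),(Negz 0))];[::((Negz 4),(Negz 1));((Negz 1),(Negz 2));((Posz 1),(Negz 1))];[::((Posz 1),(Negz 0));((Posz 1),(Posz 0));((Posz 1),(Posz 0))]]);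
([::[::false;false;true];[::false;true;false];[::true;false;false]], [::[::((Posz 0),(Posz 2));((Negz 1),(Posz 1));((Negz 2),(Negz 0))];[::((Negz 3),(Negz 0));((Negz 2),(Negz 2));((Posz 2),(Negz 1))];[::((Negz 0),(Negz 1));((Posz 2),(Negz 0));((Posz 2),(Posz 1))]]);
([::[::false;false;true];[::true;true;false];[::false;true;true]], [::[::((Posz 0),(Posz 2));((Negz 1),(Posz 1));((Negz 2),(Negz 0))];[::((Negz 2),(Negz 0));((Negz 2),(Negz 1));((Posz 0),(Negz 2))];[::((Posz 0),(Negz 0));((Posz 1),(Negz 0));((Posz 3),(Posz 1))]]);
([::[::true;true;true];[::true;true;false];[::false;true;true]], [::[::((Posz 1),(Negz 1));((Posz 3),(Posz 0));((Posz 3),(Posz 2))];[::((Posz 3),(Posz 2));((Posz 1),(Posz 2));((Negz 1),(Posz 2))];[::((Posz 0),(Posz 1));((Negz 0),(Posz 1));((Negz 2),(Negz 0))]]);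
([::[::true;true;true];[::true;false;false];[::false;true;false]], [::[::((Posz 1),(Negz 1));((Posz 3),(Posz 0));((Posz 3),(Posz 2))];[::((Posz 5),(Posz 2));((Posz 2),(Posz 4));((Negz 3),(Posz 2))];[::((Posz 0),(Posz 2));((Negz 2),(Posz 0));((Negz 1),(Negz 1))]]);
([::[::true;true;true];[::true;false;true];[::false;false;true]], [::[::((Posz 1),(Negz 1));((Posz 3),(Posz 0));((Posz 3),(Posz 2))];[::((Posz 5),(Posz 3));((Posz 0),(Posz 3));((Negz 2),(Posz 1))];[::((Negz 1),(Posz 1));((Negz 1),(Negz 0));((Negz 0),(Negz 0))]]);
([::[::true;true;true];[::false;true;false];[::true;false;false]], [::[::((Posz 1),(Negz 0));((Posz 1),(Posz 0));((Posz 1),(Posz 0))];[::((Posz 0),(Posz 1));((Negz 0),(Negz 0));((Posz 2),(Posz 0))];[::((Posz 1),(Posz 0));((Posz 2),(Posz 1));((Posz 0),(Posz 2))]]);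
([::[::true;true;true];[::true;true;false];[::true;false;true]], [::[::((Posz 1),(Negz 0));((Posz 1),(Posz 0));((Posz 1),(Posz 0))];[::((Posz 3),(Posz 3));((Negz 0),(Posz 2));((Negz 1),(Posz 0))];[::((Negz 2),(Posz 0));((Negz 1),(Negz 1));((Posz 1),(Negz 0))]]);
([::[::true;true;true];[::false;true;true];[::false;false;true]], [::[::((Posz 1),(Negz 0));((Posz 1),(Posz 0));((Posz 1),(Posz 0))];[::((Posz 4),(Posz 1));((Posz 3),(Posz 2));((Posz 1),(Posz 3))];[::((Posz 0),(Posz 2));((Negz 1),(Posz 1));((Negz 2),(Negz 0))]]);
([::[::true;true;true];[::true;false;true];[::true;false;false]], [::[::((Posz 1),(Negz 0));((Posz 3),(Posz 1));((Posz 1),(Posz 2))];[::((Posz 1),(Posz 2));((Negz 1),(Posz 2));((Negz 4),(Negz 0))];[::((Negz 0),(Posz 0));((Negz 1),(Negz 0));((Posz 0),(Negz 1))]]);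
([::[::true;true;true];[::false;true;true];[::true;true;false]], [::[::((Posz 1),(Negz 0));((Posz 3),(Posz 1));((Posz 1),(Posz 2))];[::((Posz 2),(Posz 1));((Negz 0),(Posz 2));((Negz 2),(Negz 0))];[::((Posz 1),(Posz 1));((Negz 0),(Posz 0));((Posz 0),(Posz 0))]]);
([::[::true;true;true];[::false;false;true];[::false;true;false]], [::[::((Posz 1),(Negz 0));((Posz 3),(Posz 1));((Posz 1),(Posz 2))];[::((Posz 4),(Posz 2));((Posz 0),(Posz 3));((Negz 2),(Posz 1))];[::((Negz 1),(Posz 1));((Negz 2),(Negz 0));((Negz 1),(Negz 1))]]);
([::[::true;false;false];[::false;true;false];[::false;false;true]], [::[::((Posz 1),(Posz 0));((Posz 0),(Posz 0));((Posz 0),(Posz 0))];[::((Posz 0),(Posz 0));((Posz 1),(Posz 0));((Posz 0),(Posz 0))];[::((Posz 0),(Posz 0));((Posz 0),(Posz 0));((Posz 1),(Posz 0))]]);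
([::[::true;false;false];[::false;true;true];[::true;true;false]], [::[::((Posz 1),(Posz 0));((Posz 0),(Posz 0));((Posz 0),(Posz 0))];[::((Posz 0),(Posz 2));((Negz 0),(Posz 0));((Negz 0),(Posz 0))];[::((Negz 0),(Negz 0));((Posz 1),(Posz 0));((Posz 0),(Posz 0))]]);
([::[::true;false;false];[::true;false;true];[::true;true;true]], [::[::((Posz 1),(Posz 0));((Posz 0),(Posz 0));((Posz 0),(Posz 0))];[::((Posz 1),(Posz 1));((Posz 0),(Posz 0));((Posz 1),(Posz 0))];[::((Negz 0),(Posz 1));((Negz 0),(Posz 0));((Negz 0),(Posz 0))]]);
([::[::true;false;true];[::true;false;false];[::false;true;false]], [::[::((Posz 1),(Posz 0));((Posz 0),(Posz 1));((Negz 0),(Posz 0))];[::((Negz 0),(Posz 0));((Negz 1),(Negz 1));((Posz 2),(Negz 0))];[::((Posz 0),(Posz 0));((Posz 1),(Posz 0));((Posz 0),(Posz 1))]]);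
([::[::true;false;true];[::true;true;true];[::false;true;true]], [::[::((Posz 1),(Posz 0));((Posz 0),(Posz 1));((Negz 0),(Posz 0))];[::((Posz 1),(Posz 1));((Negz 0),(Posz 0));((Negz 0),(Posz 0))];[::((Posz 0),(Posz 1));((Negz 0),(Posz 0));((Negz 0),(Negz 0))]]);
([::[::true;false;true];[::true;true;false];[::false;false;true]], [::[::((Posz 1),(Posz 0));((Posz 0),(Posz 1));((Negz 0),(Posz 0))];[::((Posz 1),(Posz 2));((Negz 2),(Posz 0));((Negz 1),(Negz 1))];[::((Negz 1),(Negz 0));((Posz 0),(Negz 1));((Posz 3),(Posz 0))]]);
([::[::true;true;false];[::true;false;true];[::false;false;true]], [::[::((Posz 1),(Posz 0));((Posz 1),(Posz 0));((Posz 2),(Posz 1))];[::((Negz 0),(Negz 0));((Posz 2),(Posz 0));((Posz 1),(Posz 2))];[::((Posz 2),(Posz 1));((Posz 0),(Posz 2));((Negz 2),(Posz 0))]]);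
([::[::true;true;false];[::true;false;false];[::false;true;true]], [::[::((Posz 1),(Posz 0));((Posz 1),(Posz 0));((Posz 2),(Posz 1))];[::((Negz 0),(Posz 2));((Negz 1),(Posz 0));((Negz 1),(Posz 0))];[::((Negz 1),(Negz 1));((Posz 1),(Negz 0));((Posz 1),(Posz 0))]]);
([::[::true;true;false];[::true;true;true];[::false;true;false]], [::[::((Posz 1),(Posz 0));((Posz 1),(Posz 0));((Posz 2),(Posz 1))];[::((Posz 3),(Posz 2));((Posz 1),(Posz 3));((Negz 2),(Posz 2))];[::((Negz 1),(Posz 1));((Negz 2),(Negz 0));((Negz 1),(Negz 1))]]);
([::[::true;true;true];[::false;false;true];[::false;true;true]], [::[::((Posz 1),(Posz 0));((Posz 1),(Posz 1));((Negz 0),(Posz 0))];[::((Negz 1),(Posz 1));((Negz 3),(Negz 0));((Negz 0),(Negz 2))];[::((Posz 0),(Negz 0));((Posz 1),(Negz 0));((Posz 3),(Posz 1))]]);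
([::[::true;true;true];[::true;false;false];[::true;false;true]], [::[::((Posz 1),(Posz 0));((Posz 1),(Posz 1));((Negz 0),(Posz 0))];[::((Posz 1),(Posz 0));((Posz 0),(Posz 0));((Posz 2),(Posz 0))];[::((Posz 1),(Posz 1));((Posz 0),(Posz 1));((Negz 0),(Posz 1))]]);
([::[::true;true;true];[::false;true;false];[::true;true;false]], [::[::((Posz 1),(Posz 0));((Posz 1),(Posz 1));((Negz 0),(Posz 0))];[::((Posz 2),(Posz 2));((Negz 0),(Posz 2));((Negz 1),(Posz 0))];[::((Negz 2),(Posz 0));((Negz 2),(Negz 1));((Posz 0),(Negz 1))]]);
([::[::true;false;false];[::false;false;true];[::true;true;true]], [::[::((Posz 1),(Posz 0));((Posz 2),(Posz 1));((Posz 0),(Posz 2))];[::((Negz 1),(Posz 0));((Negz 1),(Posz 0));((Negz 2),(Negz 1))];[::((Posz 1),(Negz 0));((Posz 1),(Posz 0));((Posz 1),(Posz 0))]]);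
([::[::true;false;false];[::true;true;false];[::true;false;true]], [::[::((Posz 1),(Posz 0));((Posz 2),(Posz 1));((Posz 0),(Posz 2))];[::((Posz 1),(Posz 3));((Negz 2),(Posz 2));((Negz 5),(Negz 1))];[::((Negz 2),(Negz 0));((Negz 1),(Negz 1));((Posz 1),(Negz 1))]]);
([::[::true;false;false];[::false;true;true];[::false;true;false]], [::[::((Posz 1),(Posz 0));((Posz 2),(Posz 1));((Posz 0),(Posz 2))];[::((Posz 2),(Posz 0));((Posz 1),(Posz 2));((Negz 2),(Posz 0))];[::((Posz 0),(Posz 2));((Negz 2),(Posz 0));((Negz 1),(Negz 1))]]);
([::[::true;true;false];[::false;true;false];[::true;true;true]], [::[::((Posz 1),(Posz 1));((Negz 0),(Posz 0));((Posz 0),(Posz 0))];[::((Negz 3),(Negz 0));((Negz 0),(Negz 2));((Posz 2),(Negz 0))];[::((Posz 1),(Negz 0));((Posz 3),(Posz 1));((Posz 1),(Posz 2))]]);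
([::[::true;true;false];[::true;false;true];[::true;false;false]], [::[::((Posz 1),(Posz 1));((Negz 0),(Posz 0));((Posz 0),(Posz 0))];[::((Negz 0),(Posz 2));((Negz 1),(Posz 0));((Negz 2),(Negz 0))];[::((Negz 2),(Negz 1));((Posz 0),(Negz 1));((Posz 2),(Negz 0))]]);
([::[::true;true;false];[::false;false;true];[::false;true;true]], [::[::((Posz 1),(Posz 1));((Negz 0),(Posz 0));((Posz 0),(Posz 0))];[::((Posz 0),(Posz 0));((Posz 2),(Posz 0));((Posz 1),(Posz 2))];[::((Posz 0),(Posz 1));((Negz 0),(Posz 1));((Negz 2),(Negz 0))]]);
([::[::true;false;true];[::true;true;false];[::true;true;true]], [::[::((Posz 1),(Posz 1));((Posz 0),(Posz 1));((Negz 0),(Posz 1))];[::((Negz 2),(Negz 0));((Negz 0),(Negz 1));((Posz 0),(Negz 0))];[::((Posz 1),(Posz 0));((Posz 1),(Posz 1));((Negz 0),(Posz 0))]]);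
([::[::true;false;true];[::false;false;true];[::false;true;true]], [::[::((Posz 1),(Posz 1));((Posz 0),(Posz 1));((Negz 0),(Posz 1))];[::((Negz 1),(Posz 1));((Negz 3),(Negz 0));((Negz 2),(Negz 2))];[::((Negz 1),(Negz 1));((Posz 1),(Negz 1));((Posz 3),(Posz 0))]]);
([::[::true;false;true];[::false;true;false];[::true;false;false]], [::[::((Posz 1),(Posz 1));((Posz 0),(Posz 1));((Negz 0),(Posz 1))];[::((Posz 0),(Posz 1));((Negz 0),(Posz 1));((Negz 3),(Negz 0))];[::((Negz 0),(Posz 0));((Negz 1),(Negz 0));((Posz 0),(Negz 1))]]);
([::[::true;false;false];[::true;true;true];[::false;true;false]], [::[::((Posz 1),(Posz 2));((Negz 1),(Posz 1));((Negz 1),(Negz 0))];[::((Negz 4),(Negz 0));((Negz 2),(Negz 3));((Posz 3),(Negz 1))];[::((Posz 0),(Negz 1));((Posz 3),(Posz 0));((Posz 2),(Posz 2))]]);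
([::[::true;false;false];[::true;true;false];[::false;false;true]], [::[::((Posz 1),(Posz 2));((Negz 1),(Posz 1));((Negz 1),(Negz 0))];[::((Negz 2),(Negz 0));((Negz 0),(Negz 1));((Posz 2),(Posz 0))];[::((Posz 0),(Posz 0));((Posz 0),(Posz 0));((Negz 0),(Posz 0))]]);
([::[::true;false;false];[::true;false;true];[::false;true;true]], [::[::((Posz 1),(Posz 2));((Negz 1),(Posz 1));((Negz 1),(Negz 0))];[::((Negz 2),(Posz 1));((Negz 3),(Negz 1));((Negz 0),(Negz 1))];[::((Negz 1),(Negz 1));((Posz 1),(Negz 1));((Posz 3),(Posz 0))]]);
([::[::false;false;true];[::false;true;true];[::true;false;true]], [::[::((Posz 2),(Negz 0));((Posz 2),(Posz 1));((Posz 1),(Posz 1))];[::((Posz 2),(Posz 3));((Negz 2),(Posz 1));((Negz 2),(Negz 0))];[::((Negz 0),(Posz 0));((Posz 0),(Negz 0));((Posz 1),(Posz 0))]]);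
([::[::false;false;true];[::true;false;false];[::true;true;true]], [::[::((Posz 2),(Negz 0));((Posz 2),(Posz 1));((Posz 1),(Posz 1))];[::((Posz 3),(Posz 2));((Posz 0),(Posz 1));((Posz 0),(Posz 1))];[::((Negz 0),(Posz 1));((Negz 0),(Posz 0));((Negz 0),(Posz 0))]]);
([::[::false;false;true];[::true;true;false];[::false;true;false]], [::[::((Posz 2),(Negz 0));((Posz 2),(Posz 1));((Posz 1),(Posz 1))];[::((Posz 3),(Posz 3));((Negz 0),(Posz 2));((Negz 1),(Posz 1))];[::((Negz 1),(Posz 1));((Negz 2),(Negz 0));((Negz 1),(Negz 1))]]);
([::[::false;true;false];[::true;false;false];[::false;false;true]], [::[::((Posz 2),(Negz 0));((Posz 3),(Posz 1));((Posz 2),(Posz 2))];[::((Posz 1),(Posz 2));((Negz 1),(Posz 1));((Negz 1),(Posz 0))];[::((Posz 0),(Posz 0));((Posz 0),(Posz 0));((Negz 0),(Posz 0))]]);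
([::[::false;true;false];[::true;false;true];[::true;true;false]], [::[::((Posz 2),(Negz 0));((Posz 3),(Posz 1));((Posz 2),(Posz 2))];[::((Posz 3),(Posz 4));((Negz 1),(Posz 3));((Negz 4),(Posz 0))];[::((Negz 2),(Posz 0));((Negz 2),(Negz 1));((Posz 0),(Negz 1))]]);
([::[::false;true;false];[::false;true;true];[::true;true;true]], [::[::((Posz 2),(Negz 0));((Posz 3),(Posz 1));((Posz 2),(Posz 2))];[::((Posz 4),(Posz 2));((Posz 1),(Posz 3));((Negz 2),(Posz 2))];[::((Negz 0),(Posz 2));((Negz 2),(Posz 0));((Negz 2),(Negz 1))]]);
([::[::false;false;true];[::true;false;false];[::false;true;true]], [::[::((Posz 2),(Posz 1));((Posz 0),(Posz 2));((Negz 2),(Posz 0))];[::((Negz 2),(Posz 2));((Negz 5),(Negz 1));((Negz 1),(Negz 3))];[::((Negz 1),(Negz 1));((Posz 1),(Negz 1));((Posz 3),(Posz 0))]]);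
([::[::false;false;true];[::false;true;false];[::true;true;false]], [::[::((Posz 2),(Posz 1));((Posz 0),(Posz 2));((Negz 2),(Posz 0))];[::((Negz 1),(Posz 0));((Negz 2),(Negz 1));((Posz 0),(Negz 2))];[::((Posz 1),(Posz 0));((Posz 1),(Posz 0));((Posz 2),(Posz 1))]]);
([::[::false;false;true];[::true;true;true];[::true;false;true]], [::[::((Posz 2),(Posz 1));((Posz 0),(Posz 2));((Negz 2),(Posz 0))];[::((Posz 1),(Posz 2));((Negz 2),(Posz 0));((Negz 0),(Negz 1))];[::((Negz 2),(Posz 0));((Negz 1),(Negz 1));((Posz 1),(Negz 0))]]);
([::[::false;true;false];[::true;true;true];[::false;true;true]], [::[::((Posz 2),(Posz 1));((Posz 1),(Posz 1));((Posz 0),(Posz 1))];[::((Negz 2),(Posz 1));((Negz 2),(Negz 0));((Negz 0),(Negz 1))];[::((Posz 0),(Negz 0));((Posz 1),(Posz 0));((Posz 1),(Posz 1))]]);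
([::[::false;true;false];[::true;false;false];[::true;false;true]], [::[::((Posz 2),(Posz 1));((Posz 1),(Posz 1));((Posz 0),(Posz 1))];[::((Negz 0),(Posz 2));((Negz 1),(Posz 1));((Negz 3),(Negz 0))];[::((Negz 2),(Negz 0));((Negz 1),(Negz 1));((Posz 1),(Negz 1))]]);
([::[::false;true;false];[::false;false;true];[::true;true;false]], [::[::((Posz 2),(Posz 1));((Posz 1),(Posz 1));((Posz 0),(Posz 1))];[::((Posz 0),(Posz 1));((Posz 0),(Posz 1));((Negz 0),(Posz 1))];[::((Negz 0),(Posz 0));((Negz 0),(Posz 0));((Negz 1),(Negz 0))]]);
([::[::false;true;true];[::false;false;true];[::true;false;false]], [::[::((Posz 2),(Posz 2));((Negz 0),(Posz 1));((Negz 0),(Posz 0))];[::((Negz 3),(Posz 1));((Negz 3),(Negz 1));((Negz 0),(Negz 1))];[::((Negz 0),(Negz 1));((Posz 2),(Negz 0));((Posz 2),(Posz 1))]]);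
([::[::false;true;true];[::true;true;true];[::true;true;false]], [::[::((Posz 2),(Posz 2));((Negz 0),(Posz 1));((Negz 0),(Posz 0))];[::((Negz 2),(Posz 0));((Negz 0),(Negz 1));((Posz 1),(Posz 0))];[::((Negz 0),(Negz 0));((Posz 1),(Posz 0));((Posz 0),(Posz 0))]]);
([::[::false;true;true];[::true;false;true];[::false;true;false]], [::[::((Posz 2),(Posz 2));((Negz 0),(Posz 1));((Negz 0),(Posz 0))];[::((Negz 2),(Posz 1));((Negz 1),(Negz 0));((Negz 0),(Negz 0))];[::((Negz 1),(Negz 0));((Negz 0),(Negz 0));((Posz 0),(Negz 0))]]);
([::[::false;true;true];[::true;true;true];[::false;false;true]], [::[::((Posz 2),(Posz 2));((Negz 0),(Posz 2));((Negz 2),(Posz 0))];[::((Negz 4),(Posz 0));((Negz 4),(Negz 2));((Negz 0),(Negz 3))];[::((Posz 0),(Negz 1));((Posz 2),(Negz 0));((Posz 3),(Posz 1))]]);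
([::[::false;true;true];[::true;true;false];[::true;false;false]], [::[::((Posz 2),(Posz 2));((Negz 0),(Posz 2));((Negz 2),(Posz 0))];[::((Negz 2),(Posz 2));((Negz 4),(Negz 1));((Negz 1),(Negz 2))];[::((Negz 2),(Negz 1));((Posz 0),(Negz 1));((Posz 2),(Negz 0))]]);
([::[::false;true;true];[::false;true;false];[::true;false;true]], [::[::((Posz 2),(Posz 2));((Negz 0),(Posz 2));((Negz 2),(Posz 0))];[::((Negz 1),(Posz 0));((Negz 2),(Negz 1));((Posz 0),(Negz 1))];[::((Negz 0),(Posz 0));((Posz 0),(Negz 0));((Posz 1),(Posz 0))]]);
([::[::true;false;true];[::false;true;true];[::true;true;true]], [::[::((Posz 3),(Posz 0));((Posz 2),(Posz 2));((Negz 0),(Posz 1))];[::((Posz 0),(Posz 2));((Negz 2),(Posz 0));((Negz 0),(Negz 1))];[::((Negz 0),(Posz 0));((Negz 0),(Negz 0));((Posz 1),(Posz 0))]]);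
([::[::true;false;true];[::true;false;false];[::true;true;false]], [::[::((Posz 3),(Posz 0));((Posz 2),(Posz 2));((Negz 0),(Posz 1))];[::((Posz 1),(Posz 4));((Negz 3),(Posz 1));((Negz 3),(Negz 1))];[::((Negz 2),(Negz 0));((Negz 0),(Negz 1));((Posz 2),(Negz 0))]]);
([::[::true;false;true];[::false;true;false];[::false;false;true]], [::[::((Posz 3),(Posz 0));((Posz 2),(Posz 2));((Negz 0),(Posz 1))];[::((Posz 2),(Posz 3));((Negz 2),(Posz 1));((Negz 1),(Negz 0))];[::((Negz 1),(Posz 1));((Negz 1),(Negz 0));((Negz 0),(Negz 0))]]);
([::[::true;true;false];[::false;true;true];[::false;true;false]], [::[::((Posz 3),(Posz 0));((Posz 3),(Posz 2));((Posz 0),(Posz 2))];[::((Posz 0),(Posz 3));((Negz 2),(Posz 1));((Negz 2),(Negz 0))];[::((Negz 1),(Negz 0));((Negz 0),(Negz 0));((Posz 0),(Negz 0))]]);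
([::[::true;true;false];[::true;false;false];[::true;true;true]], [::[::((Posz 3),(Posz 0));((Posz 3),(Posz 2));((Posz 0),(Posz 2))];[::((Posz 1),(Posz 2));((Negz 1),(Posz 2));((Negz 3),(Negz 0))];[::((Negz 0),(Posz 1));((Negz 2),(Negz 0));((Negz 0),(Negz 1))]]);
([::[::true;true;false];[::false;false;true];[::true;false;true]], [::[::((Posz 3),(Posz 0));((Posz 3),(Posz 2));((Posz 0),(Posz 2))];[::((Posz 2),(Posz 4));((Negz 3),(Posz 2));((Negz 4),(Negz 1))];[::((Negz 2),(Posz 0));((Negz 1),(Negz 1));((Posz 1),(Negz 0))]]);
([::[::true;true;false];[::false;true;true];[::false;false;true]], [::[::((Posz 3),(Posz 1));((Posz 1),(Posz 2));((Negz 1),(Posz 1))];[::((Negz 1),(Posz 2));((Negz 4),(Negz 0));((Negz 2),(Negz 3))];[::((Negz 1),(Negz 0));((Posz 0),(Negz 1));((Posz 3),(Posz 0))]]);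
([::[::true;true;false];[::true;true;true];[::true;false;false]], [::[::((Posz 3),(Posz 1));((Posz 1),(Posz 2));((Negz 1),(Posz 1))];[::((Negz 0),(Posz 2));((Negz 2),(Negz 0));((Negz 0),(Negz 1))];[::((Negz 0),(Posz 0));((Posz 0),(Posz 0));((Posz 0),(Posz 0))]]);
([::[::true;true;false];[::false;true;false];[::true;false;true]], [::[::((Posz 3),(Posz 1));((Posz 1),(Posz 2));((Negz 1),(Posz 1))];[::((Posz 0),(Posz 3));((Negz 2),(Posz 1));((Negz 3),(Negz 1))];[::((Negz 2),(Negz 0));((Negz 1),(Negz 1));((Posz 1),(Negz 1))]]);
([::[::true;false;true];[::false;false;true];[::false;true;false]], [::[::((Posz 3),(Posz 1));((Posz 2),(Posz 2));((Negz 0),(Posz 2))];[::((Negz 1),(Posz 1));((Negz 1),(Posz 0));((Negz 2),(Negz 1))];[::((Posz 0),(Posz 0));((Negz 0),(Posz 0));((Posz 0),(Negz 0))]]);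
([::[::true;false;true];[::false;true;true];[::true;false;false]], [::[::((Posz 3),(Posz 1));((Posz 2),(Posz 2));((Negz 0),(Posz 2))];[::((Negz 1),(Posz 3));((Negz 4),(Posz 0));((Negz 4),(Negz 2))];[::((Negz 2),(Negz 1));((Posz 0),(Negz 1));((Posz 2),(Negz 0))]]);
([::[::true;false;true];[::true;true;true];[::true;true;false]], [::[::((Posz 3),(Posz 1));((Posz 2),(Posz 2));((Negz 0),(Posz 2))];[::((Posz 1),(Posz 3));((Negz 2),(Posz 2));((Negz 4),(Negz 1))];[::((Negz 2),(Posz 0));((Negz 2),(Negz 1));((Posz 0),(Negz 1))]]);
([::[::true;false;false];[::false;true;false];[::false;true;true]], [::[::((Posz 3),(Posz 2));((Posz 0),(Posz 2));((Negz 1),(Posz 1))];[::((Negz 3),(Posz 2));((Negz 4),(Negz 1));((Negz 1),(Negz 2))];[::((Negz 1),(Negz 1));((Posz 1),(Negz 0));((Posz 1),(Posz 0))]]);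
([::[::true;false;false];[::true;true;true];[::true;false;true]], [::[::((Posz 3),(Posz 2));((Posz 0),(Posz 2));((Negz 1),(Posz 1))];[::((Negz 2),(Posz 1));((Negz 2),(Negz 0));((Negz 2),(Negz 1))];[::((Negz 0),(Negz 0));((Posz 0),(Negz 0));((Posz 1),(Negz 0))]]);
([::[::true;false;false];[::false;false;true];[::true;true;false]], [::[::((Posz 3),(Posz 2));((Posz 0),(Posz 2));((Negz 1),(Posz 1))];[::((Negz 1),(Posz 2));((Negz 3),(Negz 0));((Negz 2),(Negz 2))];[::((Negz 2),(Negz 0));((Negz 0),(Negz 1));((Posz 2),(Negz 0))]])].
Fixpoint lk (t : seq (code * seq (seq Oel))) (c : code) : seq (seq Oel) :=
  if t is p :: t' then (if p.1 == c then p.2 else lk t' c) else oid.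
Definition Phi (c : code) := lk table c.
Definition tcodes := map fst table.
Definition bs := [:: true; false].
Definition rows : seq (seq bool) := [seq [:: a; b.1; b.2] | a <- bs, b <- [seq (x, y) | x <- bs, y <- bs]].
Definition allc : seq code := [seq r :: t | r <- rows, t <- [seq [:: r2; r3] | r2 <- rows, r3 <- rows]].
Definition chk_hom := let T := table in all (fun p => all (fun q => lk T (cmul p.1 q.1) == omm p.2 q.2) T) T.
Definition chk_inv := all (fun x => has (fun y => (cmul x y == idc) && (cmul y x == idc)) tcodes) tcodes.
Definition chk_red := all (fun x => mk3 (fun i j => odd `|(oent (Phi x) i j).1|%N) == x) tcodes.
Definition chk_id := Phi idc == oid.
Definition chk_cover := let A := allc in let I := idc in let T := tcodes in all (fun x => (x \in T) || all (fun y => cmul x y != I) A) A.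
Definition chk_tab := all (fun p => Phi p.1 == p.2) table.
Lemma c1 : chk_hom. Proof. vm_compute. reflexivity. Qed.
Lemma c2 : chk_inv. Proof. vm_compute. reflexivity. Qed.
Lemma c3 : chk_red. Proof. vm_compute. reflexivity. Qed.
Lemma c4 : chk_id. Proof. vm_compute. reflexivity. Qed.
Lemma c5 : chk_cover. Proof. vm_compute. reflexivity. Qed.
Lemma c6 : chk_tab. Proof. vm_compute. reflexivity. Qed.

Lemma Phi_hom x y : x \in tcodes -> y \in tcodes -> Phi (cmul x y) = omm (Phi x) (Phi y).
Proof.
move=> /mapP [p Hp ->] /mapP [q Hq ->].
have Tp := allP c6 p Hp; have Tq := allP c6 q Hq.
rewrite (eqP Tp) (eqP Tq).
exact: (eqP (allP (allP c1 p Hp) q Hq)).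
Qed.

Lemma Phi_inv x : x \in tcodes -> exists2 y, y \in tcodes & cmul x y = idc /\ cmul y x = idc.
Proof.
move=> Hx; have /hasP [y Hy /andP [E1 E2]] := allP c2 x Hx.
by exists y => //; split; apply/eqP.
Qed.

Lemma Phi_red x : x \in tcodes -> mk3 (fun i j => odd `|(oent (Phi x) i j).1|%N) = x.
Proof. by move=> Hx; apply/eqP; exact: (allP c3 x Hx). Qed.

Lemma nth_mk3 (T : Type) (d : T) (F : nat -> nat -> T) (i j : 'I_3) :
  nth d (nth [::] (mk3 F) i) j = F i j.
Proof. by case: i => [[|[|[|?]]] ?] //; case: j => [[|[|[|?]]] ?]. Qed.

Lemma rows_mem a b c : [:: a; b; c] \in rows.
Proof. by case: a; case: b; case: c; vm_compute. Qed.

Lemma allc_mem a b c d e f g h k :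
  [:: [:: a; b; c]; [:: d; e; f]; [:: g; h; k]] \in allc.
Proof.
apply: (allpairs_f (fun r t => r :: t)); first exact: rows_mem.
apply: (allpairs_f (fun r2 r3 => [:: r2; r3])); exact: rows_mem.
Qed.

Lemma cover x y : x \in allc -> y \in allc -> cmul x y = idc -> x \in tcodes.
Proof.
move=> Hx Hy E; have /orP [//|/allP H] := allP c5 x Hx.
by have := H y Hy; rewrite E eqxx.
Qed.

Lemma F2c (x : 'F_2) : x = 0 \/ x = 1.
Proof. case: x => [[|[|n]]] H; [left; exact/val_inj | right; exact/val_inj | done]. Qed.
Lemma F2_11 : (1 + 1 : 'F_2) = 0. Proof. apply/val_inj; vm_compute; reflexivity. Qed.
Lemma F2_N1 : (- 1 : 'F_2) = 1. Proof. apply/val_inj; vm_compute; reflexivity. Qed.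
Lemma F2_2 : (2%:~R : 'F_2) = 0. Proof. apply/val_inj; vm_compute; reflexivity. Qed.
Lemma F2_10 : (1 : 'F_2) != 0. Proof. exact: oner_neq0. Qed.
Definition b2f (b : bool) : 'F_2 := if b then 1 else 0.
Definition f2b (x : 'F_2) : bool := x == 1.
Lemma f2bK x : b2f (f2b x) = x.
Proof. by case: (F2c x) => ->; rewrite /f2b /= ?eqxx // eq_sym oner_eq0. Qed.
Lemma b2fK b : f2b (b2f b) = b.
Proof. by case: b; rewrite /f2b /= ?eqxx // eq_sym oner_eq0. Qed.
Lemma b2f_and a b : b2f (a && b) = b2f a * b2f b.
Proof. by case: a; case: b; rewrite /= ?mul1r ?mul0r. Qed.
Lemma b2f_xor a b : b2f (xorb a b) = b2f a + b2f b.
Proof. by case: a; case: b; rewrite /= ?add0r ?addr0 ?F2_11. Qed.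
Lemma F2_nat n : (n%:R : 'F_2) = b2f (odd n).
Proof.
elim: n => [//|n IH]; rewrite mulrS IH /=; case: (odd n) => /=.
  by rewrite F2_11. by rewrite addr0.
Qed.
Lemma F2_opp (x : 'F_2) : - x = x.
Proof. by case: (F2c x) => ->; rewrite ?oppr0 ?F2_N1. Qed.
Lemma F2_int (a : int) : (a%:~R : 'F_2) = b2f (odd `|a|%N).
Proof. case: a => n; first by rewrite -pmulrn F2_nat. by rewrite NegzE mulrNz F2_opp -pmulrn F2_nat. Qed.
Lemma F2_modz (a : int) : ((a %% 2)%Z%:~R : 'F_2) = a%:~R.
Proof. by rewrite intrD intrN intrM F2_2 mulr0 oppr0 addr0. Qed.

Definition enc (M : 'M['F_2]_3) : code := mk3 (fun i j => f2b (M (inord i) (inord j))).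
Definition dec (c : code) : 'M['F_2]_3 := \matrix_(i, j) b2f (cent c i j).
Lemma dec_enc M : dec (enc M) = M.
Proof. by apply/matrixP => i j; rewrite mxE /cent nth_mk3 !inord_val f2bK. Qed.
Lemma enc_dec (F : nat -> nat -> bool) : enc (dec (mk3 F)) = mk3 F.
Proof. by rewrite /enc /dec /mk3 !mxE !inordK // !b2fK. Qed.
Lemma dec_mul x y : dec (cmul x y) = dec x *m dec y.
Proof.
apply/matrixP => i j; rewrite !mxE /cent nth_mk3 !big_ord_recr big_ord0 /= add0r !mxE.
by rewrite !b2f_xor !b2f_and.
Qed.
Lemma enc_mul A B : enc (A *m B) = cmul (enc A) (enc B).
Proof. by rewrite -{1}(dec_enc A) -{1}(dec_enc B) -dec_mul /cmul enc_dec. Qed.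
Lemma dec_id : dec idc = 1%:M.
Proof. apply/matrixP => i j; rewrite !mxE /cent nth_mk3 val_eqE. by case: (i == j). Qed.
Lemma enc1 : enc 1%:M = idc.
Proof. by rewrite -dec_id /idc enc_dec. Qed.
Lemma enc_allc M : enc M \in allc.
Proof. exact: allc_mem. Qed.

From mathcomp Require Import ring.

Lemma hom0 (R S : nzRingType) (f : R -> S) : is_ring_hom f -> f 0 = 0.
Proof. case=> _ hD _; apply: (@addrI _ (f 0)); by rewrite -hD !addr0. Qed.
Lemma homN (R S : nzRingType) (f : R -> S) : is_ring_hom f -> forall x, f (- x) = - f x.
Proof.
move=> h x; apply/eqP; rewrite -addr_eq0; have h0 := hom0 h; case: h => _ hD _.
by rewrite -hD addNr h0.
Qed.
Lemma homB (R S : nzRingType) (f : R -> S) : is_ring_hom f -> forall x y, f (x - y) = f x - f y.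
Proof. move=> h x y; have hN := homN h; case: h => _ hD _; by rewrite hD hN. Qed.
Lemma hom_nat (R S : nzRingType) (f : R -> S) : is_ring_hom f -> forall n, f n%:R = n%:R.
Proof.
move=> h; have h0 := hom0 h; case: h => h1 hD _; elim=> [|n IH]; first by rewrite h0.
by rewrite !mulrS hD h1 IH.
Qed.
Lemma hom_int (R S : nzRingType) (f : R -> S) : is_ring_hom f -> forall a : int, f a%:~R = a%:~R.
Proof.
move=> h a; have hN := homN h; have hn := hom_nat h.
case: a => n; first by rewrite -!pmulrn hn.
by rewrite NegzE !mulrNz hN -!pmulrn hn.
Qed.
Lemma hom_sum (R S : nzRingType) (f : R -> S) : is_ring_hom f ->
  forall n (F : 'I_n -> R), f (\sum_(i < n) F i) = \sum_(i < n) f (F i).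
Proof.
move=> h n F; have h0 := hom0 h; case: h => _ hD _.
exact: (big_morph f hD h0).
Qed.
Lemma map_mx_mul (R S : nzRingType) (f : R -> S) : is_ring_hom f ->
  forall (A B : 'M[R]_3), map_mx f (A *m B) = map_mx f A *m map_mx f B.
Proof.
move=> h A B; apply/matrixP => i j; rewrite !mxE (hom_sum h).
apply: eq_bigr => k _; case: h => _ _ hM; by rewrite hM !mxE.
Qed.
Lemma map_mx_1 (R S : nzRingType) (f : R -> S) : is_ring_hom f ->
  map_mx f (1%:M : 'M[R]_3) = 1%:M.
Proof. by move=> h; apply/matrixP => i j; rewrite !mxE (hom_nat h). Qed.

Definition hO (S : nzRingType) (beta : S) (x : Oel) : S := x.1%:~R + x.2%:~R * beta.
Lemma hO_add (S : comNzRingType) (beta : S) x y : hO beta (oadd x y) = hO beta x + hO beta y.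
Proof. case: x y => [a b] [c d]; rewrite /hO /= !intrD; ring. Qed.
Lemma hO_mul (S : comNzRingType) (beta : S) (hb : beta * beta + beta + 2 = 0) x y :
  hO beta (omul x y) = hO beta x * hO beta y.
Proof.
case: x y => [a b] [c d]; rewrite /hO /=.
have E : ((a * c - 2 * (b * d))%:~R + (a * d + b * c - b * d)%:~R * beta : S)
  = (a%:~R + b%:~R * beta) * (c%:~R + d%:~R * beta) - (b * d)%:~R * (beta * beta + beta + 2).
  rewrite !intrD !intrN !intrM; ring.
by rewrite E hb mulr0 subr0.
Qed.
Definition toS (S : nzRingType) (beta : S) (m : seq (seq Oel)) : 'M[S]_3 :=
  \matrix_(i, j) hO beta (oent m i j).
Lemma toS_mul (S : comNzRingType) (beta : S) (hb : beta * beta + beta + 2 = 0) m n :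
  toS beta (omm m n) = toS beta m *m toS beta n.
Proof.
apply/matrixP => i j; rewrite !mxE /oent nth_mk3 !big_ord_recr big_ord0 /= add0r !mxE.
by rewrite !hO_add !(hO_mul hb).
Qed.
Lemma toS_id (S : comNzRingType) (beta : S) : toS beta oid = 1%:M.
Proof.
apply/matrixP => i j; rewrite !mxE /oent nth_mk3 val_eqE /hO.
by case: (i == j) => /=; rewrite ?mul0r ?addr0.
Qed.
From Stdlib Require Import ClassicalEpsilon.
Ltac cmp := apply/val_inj; vm_compute; reflexivity.
Definition pi4 (x : 'Z_4) : 'F_2 := b2f (odd x).
Definition beta4 : 'Z_4 := 2.
Lemma Z4c (x : 'Z_4) : [\/ x = 0, x = 1, x = 2 | x = 3].
Proof.
case: x => [[|[|[|[|n]]]] H]; [constructor 1|constructor 2|constructor 3|constructor 4|];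
  try by apply/val_inj. done.
Qed.
Lemma hom4 : is_ring_hom pi4.
Proof.
split; first by cmp.
- by move=> x y; case: (Z4c x) => ->; case: (Z4c y) => ->; cmp.
- by move=> x y; case: (Z4c x) => ->; case: (Z4c y) => ->; cmp.
Qed.
Lemma hb4 : beta4 * beta4 + beta4 + 2 = 0. Proof. cmp. Qed.
Lemma hpb4 : pi4 beta4 = 0. Proof. cmp. Qed.
Lemma ker4 (a b : 'Z_4) : pi4 a = 0 -> pi4 b = 0 -> a * b = 0.
Proof.
case: (Z4c a) => ->; case: (Z4c b) => -> Ha Hb; try cmp;
  try (exfalso; move: Ha; rewrite /pi4 /b2f /=; exact/eqP/oner_neq0);
  try (exfalso; move: Hb; rewrite /pi4 /b2f /=; exact/eqP/oner_neq0).
Qed.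
Lemma mpow_ker (R : nzRingType) (pi : R -> 'F_2) : is_ring_hom pi ->
  forall i x, mpow (mker pi) i x -> (0 < i)%N -> pi x = 0.
Proof.
move=> h i x; elim => //= [k|k a b y Ha _ _ _ IHy _]; first by rewrite (hom0 h).
by case: h => _ hD hM; rewrite hD hM Ha mul0r add0r IHy.
Qed.
Lemma mpow_0 (R : nzRingType) (I : R -> Prop) i : mpow I i 0.
Proof. case: i => [|i]; [exact: mpow0 | exact: mpowZ]. Qed.

Definition rhoS (R S : comNzRingType) (piR : R -> 'F_2) (beta : S) (g : 'M[R]_3) : 'M[S]_3 :=
  toS beta (Phi (enc (map_mx piR g))).

Lemma enc_tcodes (R : comNzRingType) (piR : R -> 'F_2) : is_ring_hom piR ->
  forall g : 'M[R]_3, \det g = 1 -> enc (map_mx piR g) \in tcodes.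
Proof.
move=> h g dg; apply: (@cover _ (enc (map_mx piR (\adj g)))); [exact: enc_allc | exact: enc_allc |].
by rewrite -enc_mul -(map_mx_mul h) mul_mx_adj dg (map_mx_1 h) enc1.
Qed.

Lemma lift_gen (R S : comNzRingType) (piR : R -> 'F_2) (piS : S -> 'F_2) (beta : S)
  (hR : is_ring_hom piR) (hS : is_ring_hom piS) (hb : beta * beta + beta + 2 = 0)
  (hpb : piS beta = 0) :
  is_lift piR piS (map_mx piR) (rhoS piR beta).
Proof.
have rho1 : forall g : 'M[R]_3, map_mx piR g = 1%:M -> rhoS piR beta g = 1%:M.
  move=> g E; rewrite /rhoS E enc1 (eqP c4). exact: toS_id.
split.
- move=> g k dg dk; rewrite /rhoS (map_mx_mul hR) enc_mul.
  rewrite Phi_hom; [exact: toS_mul | exact: enc_tcodes | exact: enc_tcodes].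
- move=> g dg; have Hx := enc_tcodes hR dg.
  have [y Hy [E1 E2]] := Phi_inv Hx.
  have K1 : toS beta (Phi (enc (map_mx piR g))) *m toS beta (Phi y) = 1%:M.
    by rewrite -(toS_mul hb) -(Phi_hom Hx Hy) E1 (eqP c4) toS_id.
  have K2 : toS beta (Phi y) *m toS beta (Phi (enc (map_mx piR g))) = 1%:M.
    by rewrite -(toS_mul hb) -(Phi_hom Hy Hx) E2 (eqP c4) toS_id.
  exact: (ex_intro _ (toS beta (Phi y)) (conj K1 K2)).
- move=> g dg; have Hx := enc_tcodes hR dg.
  rewrite /rhoS -[in RHS](dec_enc (map_mx piR g)).
  move: Hx; move: (enc (map_mx piR g)) => x Hx.
  apply/matrixP => i j; rewrite !mxE /cent -{2}(Phi_red Hx) nth_mk3 /hO.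
  have hi := hom_int hS.
  case: hS => _ hD hM; rewrite hD hM hpb mulr0 addr0.
  by rewrite hi F2_int.
- move=> j; exists 1%N => g dg Hc.
  have E : map_mx piR g = 1%:M.
    apply/matrixP => r c; rewrite !mxE.
    have := mpow_ker hR (Hc r c) isT; rewrite (homB hR) mxE => /eqP; rewrite subr_eq0 => /eqP ->.
    by rewrite (hom_nat hR).
  rewrite (rho1 _ E) => r c; rewrite subrr; exact: mpow_0.
Qed.
Lemma local4 : local_res pi4.
Proof.
split; first exact: hom4.
move=> x; case: (Z4c x) => -> H.
- by move: H; rewrite (_ : pi4 0 = 0); [move/eqP | cmp].
- by exists 1; rewrite mulr1.
- by move: H; rewrite (_ : pi4 2 = 0); [move/eqP | cmp].
- by exists 3; split; cmp.
Qed.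

Definition decP (P : Prop) : bool := if excluded_middle_informative P then true else false.
Lemma decPE (P : Prop) : decP P -> P.
Proof. by rewrite /decP; case: excluded_middle_informative. Qed.
Lemma decPI (P : Prop) : P -> decP P.
Proof. by rewrite /decP; case: excluded_middle_informative. Qed.

Lemma noeth4 : noetherian [the comNzRingType of 'Z_4].
Proof.
move=> I _; exists [seq x <- enum 'Z_4 | decP (I x)]; split.
  move=> i Hi; have := mem_nth 0 Hi; rewrite mem_filter => /andP [H _]; exact: decPE.
move=> x Hx; set s := [seq x <- enum 'Z_4 | decP (I x)].
have xs : x \in s by rewrite mem_filter decPI // mem_enum.
have Hj : (index x s < size s)%N by rewrite index_mem.
exists (fun i => if i == Ordinal Hj then 1 else 0).
rewrite (bigD1 (Ordinal Hj)) //= eqxx mul1r nth_index // big1 ?addr0 //.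
by move=> i /negPf ->; rewrite mul0r.
Qed.

Lemma mpow4 i x : mpow (mker pi4) i x -> (1 < i)%N -> x = 0.
Proof.
elim => // k a b y Ha Hb _ _ IHy Hk.
have Pb := mpow_ker hom4 Hb Hk.
by rewrite IHy // addr0; apply: ker4.
Qed.

Lemma complete4 : m_complete pi4.
Proof.
split; first by move=> x H; exact: (mpow4 (H 2%N)).
move=> x H; exists (x 2%N) => i.
have E : forall k, x (k + 2)%N = x 2%N.
  elim=> // k IH; rewrite -IH; apply/eqP; rewrite -subr_eq0; apply/eqP.
  by apply: (mpow4 (H (k + 2)%N)); rewrite addn2.
case: i => [|[|k]]; first exact: mpow0.
  exact: H 1%N.
by rewrite -(addn2 k) E subrr; exact: mpow_0.
Qed.

Lemma chat4 : in_Chat pi4.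
Proof. split; [exact: local4 | exact: noeth4 | exact: complete4]. Qed.
From mathcomp Require Import zify.
Lemma z2res_hom : is_ring_hom z2res.
Proof.
have p1 : pw 1 = 2 by [].
split.
- by rewrite /z2res /= p1.
- by move=> x y; rewrite /z2res /= p1 F2_modz intrD.
- by move=> x y; rewrite /z2res /= p1 F2_modz intrM.
Qed.

Definition fpoly (a : int) : int := a * a + a + 2.
Fixpoint aseq (n : nat) : int :=
  match n with
  | 0%N => 0
  | n'.+1 => if (pw n'.+1 %| fpoly (aseq n'))%Z then aseq n' else aseq n' + pw n'
  end.

Lemma aseq1 : aseq 1 = 0. Proof. reflexivity. Qed.

Lemma aseq_root n : (pw n %| fpoly (aseq n))%Z.
Proof.
elim: n => [|n IH]; first exact: dvd1z.
rewrite /=; case: ifP => // Hnd.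
case: n IH Hnd => [|m] IH Hnd; first by move: Hnd; vm_compute.
set a := aseq m.+1 in IH Hnd *.
set d := pw m.+1 in IH Hnd *.
have d0 : d != 0 by rewrite /d /pw; apply/eqP => /eqP; rewrite eqz_nat expn_eq0.
have [k Hk] := dvdzP IH.
have E : fpoly (a + d) = d * (k + 2 * a + 1 + d).
  rewrite /fpoly; move: Hk; rewrite /fpoly => Hk.
  have -> : (a + d) * (a + d) + (a + d) + 2 = (a * a + a + 2) + d * (2 * a + 1 + d) by ring.
  rewrite Hk; ring.
rewrite E pwS -/d dvdz_mul2l //.
move: Hnd; rewrite pwS -/d Hk mulrC dvdz_mul2l // => Hk2.
have [q r] := (divz_eq k 2, modz_ge0 k (isT : (2:int) != 0)).
have r2 := ltz_pmod k (isT : (0:int) < 2).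
have e : exists e, d = e * 2 by exists (pw m); rewrite /d pwS.
case: e => e He.
set rr := (k %% 2)%Z in q r r2.
have [R0|R1] : rr = 0 \/ rr = 1 by lia.
  by move: Hk2; rewrite q R0 addr0 dvdz_mull // dvdzz.
apply/dvdzP; exists (divz k 2 + 1 + a + e).
rewrite He {1}q R1; ring.
Qed.

Lemma aseq_coh n : (aseq n.+1 %% pw n)%Z = (aseq n %% pw n)%Z.
Proof. rewrite /=; case: ifP => // _; exact: modzDr. Qed.

Lemma beta_coh n :
  (fun k => (aseq k %% pw k)%Z) n = ((fun k => (aseq k %% pw k)%Z) n.+1 %% pw n)%Z.
Proof. by rewrite /= modpwS aseq_coh. Qed.
Definition beta2 : Z2 := MkZ2 beta_coh.

Definition eqm (p x y : int) := (x %% p)%Z = (y %% p)%Z.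
Lemma eqm_refl p x : eqm p x x. Proof. by []. Qed.
Lemma eqm_add p x x' y y' : eqm p x x' -> eqm p y y' -> eqm p (x + y) (x' + y').
Proof. by rewrite /eqm => E1 E2; rewrite -modzDm E1 E2 modzDm. Qed.
Lemma eqm_mul p x x' y y' : eqm p x x' -> eqm p y y' -> eqm p (x * y) (x' * y').
Proof. by rewrite /eqm => E1 E2; rewrite -modzMm E1 E2 modzMm. Qed.
Lemma eqm_modl p x y : eqm p x y -> eqm p (x %% p)%Z y.
Proof. by rewrite /eqm modz_mod. Qed.

Lemma beta2_root : beta2 * beta2 + beta2 + 2 = 0.
Proof.
have -> : (2 : Z2) = 1 + 1 by rewrite mulr2n.
rewrite !addrA; apply: z2_ext => n /=.
have -> : (0 : int) = (fpoly (aseq n) %% pw n)%Z by apply/esym/dvdz_mod0P/aseq_root.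
have -> : fpoly (aseq n) = ((aseq n * aseq n + aseq n) + 1) + 1 by rewrite /fpoly; ring.
have r1 : eqm (pw n) (1 %% pw n)%Z 1 by apply: eqm_modl; exact: eqm_refl.
have ra : eqm (pw n) (aseq n %% pw n)%Z (aseq n) by apply: eqm_modl; exact: eqm_refl.
apply: eqm_add => //; apply: eqm_modl; apply: eqm_add => //; apply: eqm_modl.
apply: eqm_add => //; apply: eqm_modl; exact: eqm_mul.
Qed.
Lemma z2res_beta2 : z2res beta2 = 0.
Proof. rewrite /z2res /=. have -> : (aseq 1 %% pw 1)%Z = 0 by vm_compute. by []. Qed.
Lemma rhoS1 (R S : comNzRingType) (piR : R -> 'F_2) (beta : S) (g : 'M[R]_3) :
  map_mx piR g = 1%:M -> rhoS piR beta g = 1%:M.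
Proof. move=> E; rewrite /rhoS E enc1 (eqP c4). exact: toS_id. Qed.

Theorem mainTheorem6 (R : comNzRingType) (piR : R -> 'F_2) (hR : in_Chat piR) :
  (exists rho0 : 'M[R]_3 -> 'M[Z2]_3, is_lift piR z2res (map_mx piR) rho0) /\
  ~ universal_lift piR piR (map_mx piR) (fun g : 'M[R]_3 => g).
Proof.
have hRh : is_ring_hom piR by case: hR => [[]].
split.
  exists (rhoS piR beta2); exact: (lift_gen hRh z2res_hom beta2_root z2res_beta2).
case=> _ _ U.
have L4 := lift_gen hRh hom4 hb4 hpb4.
have [f [[hf _] [P [Q [PQ QP _ Hg]]] _]] := U _ pi4 chat4 _ L4.
pose g : 'M[R]_3 := \matrix_(i, j) (if (i == j :> nat) then 1 else
   if ((i == 1%N :> nat) && (j == 0%N :> nat)) then 1 + 1 else 0).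
have dg : \det g = 1.
  rewrite det_trig; last first.
    apply/is_trig_mxP => i j lt; rewrite mxE.
    rewrite (ltn_eqF lt); case: ifP => // /andP [/eqP Hi /eqP Hj].
    by move: lt; rewrite Hi Hj.
  by rewrite big1 // => i _; rewrite mxE eqxx.
have mg : map_mx piR g = 1%:M.
  apply/matrixP => i j; rewrite !mxE.
  case: (eqVneq i j) => [<-|Hij]; first by rewrite !eqxx; case: hRh.
  rewrite val_eqE (negbTE Hij).
  case: ifP => _; last exact: (hom0 hRh).
  case: hRh => h1 hD _; by rewrite hD h1 F2_11.
have X1 : map_mx f g = 1%:M.
  have := Hg g dg; rewrite (rhoS1 beta4 mg) => E.
  have K : Q *m (P *m map_mx f g *m Q) *m P = map_mx f g.
    by rewrite !mulmxA QP mul1mx -mulmxA QP mulmx1.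
  by rewrite -K -E mulmx1 QP.
have := congr1 (fun M : 'M['Z_4]_3 => M (inord 1) (inord 0)) X1.
rewrite /= !mxE !inordK //= .
case: hf => h1 hD _; rewrite hD h1 -val_eqE /= !inordK //=.
Qed.
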